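(* Let $\epsilon>0$, $R>0$, $\lambda\in C([0,R])$, and let $\mathcal T'=\{(\alpha,\beta):0\le\beta\le\alpha\le 2R,\ \beta\le 2R-\alpha\}$. Define $\bar\lambda=\max_{\rho\in[0,R]}\frac{|\lambda(\rho)|}{4\epsilon}$, $$G_0(\alpha,\beta)=-\int_{\beta/2}^{\alpha/2}\frac{\lambda(\rho)}{2\epsilon}\,d\rho,$$ and for $k\ge1$ $$G_k(\alpha,\beta)=\int_\beta^\alpha\!\!\int_0^\beta\frac{\lambda\left(\frac{\eta-\sigma}{2}\right)}{4\epsilon}G_{k-1}(\eta,\sigma)\,d\sigma\,d\eta+\int_\beta^\alpha\!\!\int_0^\beta\frac{\eta\sigma}{(\eta^2-\sigma^2)^2}G_{k-1}(\eta,\sigma)\,d\sigma\,d\eta.$$ Then $|G_0|\le F_{00}$ on $\mathcal T'$, and for every $n\ge1$ the integrals defining $G_n$ converge absolutely on $\mathcal T'$ and $$|G_n(\alpha,\beta)|\le F_{n0}(\alpha,\beta)+\sum_{i=0}^{n-1}\sum_{j=1}^{n-i}\frac{C_{(n-i)j}}{4^{\,n-i}}F_{ij}(\alpha,\beta)\qquad\text{for all }(\alpha,\beta)\in\mathcal T'.$$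
   Context: For integers $n,k\ge0$ and $0\le\beta<\alpha$, $F_{nk}(\alpha,\beta)=\frac{\bar\lambda^{n+1}\alpha^n\beta^n}{n!(n+1)!}(\alpha-\beta)\frac{\log^k\left(\frac{\alpha+\beta}{\alpha-\beta}\right)}{k!}$, extended continuously by $0$ on the diagonal $\alpha=\beta$. The numbers $C_{ij}$ (Catalan's triangle) are defined by: $C_{11}=1$; $C_{i0}=0$; $C_{ij}=0$ if $j>i$; and $C_{ij}=C_{(i-1)(j-1)}+C_{i(j+1)}$ for all other index pairs ($i\ge2$, $1\le j\le i$). *)

(* Defs.v *)
From Stdlib Require Import Reals Lra List Arith ClassicalEpsilon Factorial.
Open Scope R_scope.

(* Value of the Riemann integral of f on [a,b] (Stdlib orientation);
   arbitrary if f is not Riemann integrable there. *)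
Definition RInt (f : R -> R) (a b : R) : R :=
  epsilon (inhabits 0)
    (fun v => exists pr : Riemann_integrable f a b, RiemannInt pr = v).

Definition lim_right0 (g : R -> R) (l : R) : Prop :=
  forall e, 0 < e -> exists d, 0 < d /\
    forall x, 0 < x < d -> Rabs (g x - l) < e.

Definition Lim0 (g : R -> R) : R := epsilon (inhabits 0) (lim_right0 g).

(* The only possible singularity of the integrands below is at the corner
   eta = sigma = beta, which the truncation removes. *)
Definition trunc_int (f : R -> R -> R) (alpha beta d : R) : R :=
  RInt (fun eta => RInt (fun sigma => f eta sigma) 0 beta) (Rmin (beta + d) alpha) alpha.

Definition dint (f : R -> R -> R) (alpha beta : R) : R :=
  Lim0 (trunc_int f alpha beta).

Definition abs_conv (f : R -> R -> R) (alpha beta : R) : Prop :=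
  (forall eta, beta < eta <= alpha ->
     inhabited (Riemann_integrable (fun sigma => f eta sigma) 0 beta) /\
     inhabited (Riemann_integrable (fun sigma => Rabs (f eta sigma)) 0 beta)) /\
  (forall d, 0 < d -> beta + d <= alpha ->
     inhabited (Riemann_integrable (fun eta => RInt (fun sigma => f eta sigma) 0 beta) (beta + d) alpha) /\
     inhabited (Riemann_integrable (fun eta => RInt (fun sigma => Rabs (f eta sigma)) 0 beta) (beta + d) alpha)) /\
  (exists l, lim_right0 (trunc_int (fun eta sigma => Rabs (f eta sigma)) alpha beta) l) /\
  (exists l, lim_right0 (trunc_int f alpha beta) l).

Definition K1 (eps : R) (lam : R -> R) (g : R -> R -> R) (eta sigma : R) : R :=
  lam ((eta - sigma) / 2) / (4 * eps) * g eta sigma.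

Definition K2 (g : R -> R -> R) (eta sigma : R) : R :=
  eta * sigma / (eta ^ 2 - sigma ^ 2) ^ 2 * g eta sigma.

Fixpoint G (eps : R) (lam : R -> R) (k : nat) (alpha beta : R) : R :=
  match k with
  | O => - RInt (fun rho => lam rho / (2 * eps)) (beta / 2) (alpha / 2)
  | S k' => dint (K1 eps lam (G eps lam k')) alpha beta
            + dint (K2 (G eps lam k')) alpha beta
  end.

Definition F (lbar : R) (n k : nat) (alpha beta : R) : R :=
  if Rlt_dec beta alpha then
    lbar ^ (n + 1) * alpha ^ n * beta ^ n / (INR (fact n) * INR (fact (n + 1)))
    * (alpha - beta) * (ln ((alpha + beta) / (alpha - beta))) ^ k / INR (fact k)
  else 0.

Definition inT' (Rr alpha beta : R) : Prop :=
  0 <= beta /\ beta <= alpha /\ alpha <= 2 * Rr /\ beta <= 2 * Rr - alpha.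

Definition cont_on (lam : R -> R) (a b : R) : Prop :=
  forall x, a <= x <= b -> forall e, 0 < e -> exists d, 0 < d /\
    forall y, a <= y <= b -> Rabs (y - x) < d -> Rabs (lam y - lam x) < e.

Definition sumL (s : list nat) (f : nat -> R) : R := fold_right Rplus 0 (map f s).

(* Main.v *)
Require Import Defs.
From Stdlib Require Import Reals List.
From Stdlib Require Import Lra Lia ClassicalEpsilon Factorial Wf_nat Compare_dec.
From Coquelicot Require Import Coquelicot.
Open Scope R_scope.

Lemma DRInt_eq f a b : ex_RInt f a b -> Defs.RInt f a b = RInt f a b.
Proof.
  intros H. pose proof (ex_RInt_Reals_0 _ _ _ H) as pr.
  unfold Defs.RInt.
  assert (E : exists v, exists pr : Riemann_integrable f a b, RiemannInt pr = v) by (exists (RiemannInt pr); exists pr; reflexivity).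
  destruct (epsilon_spec (inhabits 0) _ E) as [pr' Hpr'].
  rewrite <- Hpr'. symmetry. apply RInt_Reals.
Qed.

Lemma DRInt_point f a : Defs.RInt f a a = 0.
Proof. rewrite DRInt_eq by apply ex_RInt_point. rewrite RInt_point; reflexivity. Qed.

Lemma lim_right0_unique g l1 l2 : lim_right0 g l1 -> lim_right0 g l2 -> l1 = l2.
Proof.
  intros H1 H2. destruct (Req_dec l1 l2) as [|Hne]; [auto|].
  set (e := Rabs (l1 - l2) / 2).
  assert (He : 0 < e) by (unfold e; apply Rdiv_lt_0_compat; [apply Rabs_pos_lt; lra|lra]).
  destruct (H1 e He) as [d1 [Hd1 P1]]. destruct (H2 e He) as [d2 [Hd2 P2]].
  set (x := Rmin d1 d2 / 2).
  assert (Hx1 : 0 < x < d1) by (unfold x, Rmin; destruct Rle_dec; lra).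
  assert (Hx2 : 0 < x < d2) by (unfold x, Rmin; destruct Rle_dec; lra).
  specialize (P1 x Hx1). specialize (P2 x Hx2).
  assert (Rabs (l1 - l2) <= Rabs (g x - l1) + Rabs (g x - l2)).
  { replace (l1 - l2) with (-(g x - l1) + (g x - l2)) by ring.
    eapply Rle_trans; [apply Rabs_triang|]. rewrite Rabs_Ropp; lra. }
  unfold e in *; lra.
Qed.

Lemma Lim0_eq g l : lim_right0 g l -> Lim0 g = l.
Proof.
  intros H. unfold Lim0.
  assert (E : exists l, lim_right0 g l) by eauto.
  pose proof (epsilon_spec (inhabits 0) _ E) as H'.
  eapply lim_right0_unique; eauto.
Qed.

Definition rcont (f : R -> R) (a b : R) : Prop :=
  forall x, a <= x <= b -> forall e, 0 < e -> exists d, 0 < d /\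
    forall y, a <= y <= b -> Rabs (y - x) < d -> Rabs (f y - f x) < e.

Definition clamp a b x := Rmax a (Rmin b x).

Lemma clamp_in a b x : a <= b -> a <= clamp a b x <= b.
Proof. intros; unfold clamp, Rmax, Rmin; repeat destruct Rle_dec; lra. Qed.

Lemma clamp_id a b x : a <= x <= b -> clamp a b x = x.
Proof. intros; unfold clamp, Rmax, Rmin; repeat destruct Rle_dec; lra. Qed.

Lemma clamp_lip a b x y : a <= b -> Rabs (clamp a b y - clamp a b x) <= Rabs (y - x).
Proof. intros; unfold clamp, Rmax, Rmin; repeat destruct Rle_dec; unfold Rabs; repeat destruct Rcase_abs; lra. Qed.

Lemma rcont_ex_RInt f a b : a <= b -> rcont f a b -> ex_RInt f a b.
Proof.
  intros Hab Hc.
  apply ex_RInt_ext with (f := fun x => f (clamp a b x)).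
  { intros x Hx. rewrite Rmin_left in Hx by lra. rewrite Rmax_right in Hx by lra.
    rewrite clamp_id; auto; lra. }
  apply (ex_RInt_continuous (V := R_CompleteNormedModule)). intros z _.
  apply continuity_pt_filterlim.
  intros e He.
  destruct (Hc (clamp a b z) (clamp_in a b z Hab) e He) as [d [Hd P]].
  exists d; split; auto. intros y Hy.
  apply P. apply clamp_in; auto.
  eapply Rle_lt_trans; [apply clamp_lip; auto|]. destruct Hy as [_ Hy]. exact Hy.
Qed.

Lemma exC1 (g : R -> R) a b c : a <= b <= c -> ex_RInt g a c -> ex_RInt g a b.
Proof. apply (ex_RInt_Chasles_1 (V := R_CompleteNormedModule)). Qed.
Lemma exC2 (g : R -> R) a b c : a <= b <= c -> ex_RInt g a c -> ex_RInt g b c.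
Proof. apply (ex_RInt_Chasles_2 (V := R_CompleteNormedModule)). Qed.
Lemma RIntC (g : R -> R) a b c : ex_RInt g a b -> ex_RInt g b c -> RInt g a b + RInt g b c = RInt g a c.
Proof. apply (RInt_Chasles (V := R_CompleteNormedModule)). Qed.
Lemma RIntM (g h : R -> R) a b : ex_RInt g a b -> ex_RInt h a b ->
  RInt (fun x => g x - h x) a b = RInt g a b - RInt h a b.
Proof. apply (RInt_minus (V := R_CompleteNormedModule)). Qed.
Lemma RIntP (g h : R -> R) a b : ex_RInt g a b -> ex_RInt h a b ->
  RInt (fun x => g x + h x) a b = RInt g a b + RInt h a b.
Proof. apply (RInt_plus (V := R_CompleteNormedModule)). Qed.
Lemma exM (g h : R -> R) a b : ex_RInt g a b -> ex_RInt h a b -> ex_RInt (fun x => g x - h x) a b.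
Proof. apply (ex_RInt_minus (V := R_NormedModule)). Qed.
Lemma exP (g h : R -> R) a b : ex_RInt g a b -> ex_RInt h a b -> ex_RInt (fun x => g x + h x) a b.
Proof. apply (ex_RInt_plus (V := R_NormedModule)). Qed.

Lemma lm1' (x y : R) : y = x + y - x.
Proof. ring. Qed.

Lemma chas_sub (g : R -> R) a b c : ex_RInt g a b -> ex_RInt g b c -> RInt g b c = RInt g a c - RInt g a b.
Proof. intros H1 H2. rewrite <- (RIntC g a b c) by auto. apply lm1'. Qed.

Definition ucS (S : R -> R -> Prop) (f : R -> R -> R) : Prop :=
  forall e, 0 < e -> exists dl, 0 < dl /\ forall x y x' y', S x y -> S x' y' ->
    Rabs (x - x') < dl -> Rabs (y - y') < dl -> Rabs (f x y - f x' y') < e.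

Definition Om (Rr d : R) (x y : R) : Prop := inT' Rr x y /\ d <= x - y.

Record KS (Rr : R) (Phi P B : R -> R -> R) (w : R -> R) : Prop := {
  ks_Rr : 0 < Rr;
  ks_Phi : forall x b, inT' Rr x b -> b < x -> is_RInt (fun s => Phi x s) 0 b (P x b);
  ks_P : forall a b c, inT' Rr a b -> b < c <= a -> is_RInt (fun x => P x b) c a (B a b - B c b);
  ks_B0 : forall a b, inT' Rr a b -> 0 <= B a b;
  ks_Bw : forall a b, inT' Rr a b -> B a b <= w (a - b);
  ks_wmono : forall x y, 0 <= x <= y -> w x <= w y;
  ks_wnn : forall x, 0 <= x -> 0 <= w x;
  ks_wlim : forall e, 0 < e -> exists d, 0 < d /\ w d < e }.

Record fgood (Rr : R) (Phi : R -> R -> R) (f : R -> R -> R) : Prop := {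
  fg_uc : forall d, 0 < d -> ucS (Om Rr d) f;
  fg_le : forall x s, inT' Rr x s -> s < x -> Rabs (f x s) <= Phi x s;
  fg_bnd : forall d, 0 < d -> exists M, forall x s, Om Rr d x s -> Rabs (f x s) <= M }.

Lemma fgood_abs Rr Phi f : fgood Rr Phi f -> fgood Rr Phi (fun x s => Rabs (f x s)).
Proof.
  intros [H1 H2 H3]; split.
  - intros d Hd e He. destruct (H1 d Hd e He) as [dl [Hdl P]]. exists dl; split; auto.
    intros. eapply Rle_lt_trans; [apply Rabs_triang_inv2|]. auto.
  - intros. rewrite Rabs_Rabsolu. auto.
  - intros d Hd. destruct (H3 d Hd) as [M HM]. exists M. intros. rewrite Rabs_Rabsolu. auto.
Qed.

Definition hh (f : R -> R -> R) x b := RInt (fun s => f x s) 0 b.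
Definition tr (f : R -> R -> R) a b d : R :=
  if Rle_dec (b + d) a then RInt (fun x => hh f x b) (b + d) a else 0.

Lemma inner_rcont Rr Phi f x b : fgood Rr Phi f -> inT' Rr x b -> b < x ->
  rcont (fun s => f x s) 0 b.
Proof.
  intros Hf Hx Hb y Hy e He.
  destruct (fg_uc _ _ _ Hf (x - b) ltac:(lra) e He) as [dl [Hdl P]].
  exists dl; split; auto. intros z Hz Hzy.
  apply P; unfold Om, inT' in *; try lra.
  rewrite Rminus_diag, Rabs_R0; lra.
Qed.

Lemma inner_ex Rr Phi f x b : fgood Rr Phi f -> inT' Rr x b -> b < x ->
  ex_RInt (fun s => f x s) 0 b.
Proof. intros. apply rcont_ex_RInt; [unfold inT' in *; lra|]. eapply inner_rcont; eauto. Qed.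

Lemma hh_le Rr Phi P B w f x b : KS Rr Phi P B w -> fgood Rr Phi f -> inT' Rr x b -> b < x ->
  Rabs (hh f x b) <= P x b.
Proof.
  intros HK Hf Hx Hb. unfold hh.
  assert (H0b : 0 <= b) by (unfold inT' in *; lra).
  eapply Rle_trans; [apply abs_RInt_le; auto; eapply inner_ex; eauto|].
  rewrite <- (is_RInt_unique _ _ _ _ (ks_Phi _ _ _ _ _ HK x b Hx Hb)).
  apply RInt_le; auto.
  - apply (inner_ex _ _ _ _ _ (fgood_abs _ _ _ Hf) Hx Hb).
  - eexists; apply (ks_Phi _ _ _ _ _ HK x b Hx Hb).
  - intros s Hs. apply (fg_le _ _ _ Hf); unfold inT' in *; lra.
Qed.

Lemma outer_rcont Rr Phi f a b d : fgood Rr Phi f -> inT' Rr a b -> 0 < d -> b + d <= a ->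
  rcont (fun x => hh f x b) (b + d) a.
Proof.
  intros Hf Hab Hd Hbd x Hx e He.
  assert (H0b : 0 <= b) by (unfold inT' in *; lra).
  destruct (fg_uc _ _ _ Hf d Hd (e / (b + 1))) as [dl [Hdl P]].
  { apply Rdiv_lt_0_compat; lra. }
  exists dl; split; auto. intros y Hy Hyx. unfold hh.
  assert (Ey : ex_RInt (fun s => f y s) 0 b) by (eapply inner_ex; eauto; unfold inT' in *; lra).
  assert (Ex : ex_RInt (fun s => f x s) 0 b) by (eapply inner_ex; eauto; unfold inT' in *; lra).
  assert (E : RInt (fun s => f y s) 0 b - RInt (fun s => f x s) 0 b =
              RInt (fun s => f y s - f x s) 0 b).
  { symmetry. apply (RInt_minus (V := R_CompleteNormedModule)); auto. }
  rewrite E.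
  apply Rle_lt_trans with ((b - 0) * (e / (b + 1))).
  - apply abs_RInt_le_const; auto.
    + apply (ex_RInt_minus (V := R_NormedModule)); auto.
    + intros t Ht. left. apply P; unfold Om, inT' in *; try lra.
      rewrite Rminus_diag, Rabs_R0; lra.
  - rewrite Rminus_0_r. apply Rlt_le_trans with ((b + 1) * (e / (b + 1))).
    + apply Rmult_lt_compat_r; [apply Rdiv_lt_0_compat|]; lra.
    + right; field; lra.
Qed.

Lemma outer_ex Rr Phi f a b c : fgood Rr Phi f -> inT' Rr a b -> b < c <= a ->
  ex_RInt (fun x => hh f x b) c a.
Proof.
  intros Hf Hab Hc. apply rcont_ex_RInt; [lra|].
  replace c with (b + (c - b)) by ring. apply (outer_rcont Rr Phi); auto; lra.
Qed.

Lemma outer_le Rr Phi P B w f a b c : KS Rr Phi P B w -> fgood Rr Phi f -> inT' Rr a b -> b < c <= a ->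
  Rabs (RInt (fun x => hh f x b) c a) <= B a b - B c b.
Proof.
  intros HK Hf Hab Hc.
  eapply Rle_trans; [apply abs_RInt_le; [lra|]; eapply outer_ex; eauto|].
  rewrite <- (is_RInt_unique _ _ _ _ (ks_P _ _ _ _ _ HK a b c Hab Hc)).
  apply RInt_le; [lra| | |].
  - apply rcont_ex_RInt; [lra|]. intros y Hy e He.
    replace c with (b + (c - b)) in Hy by ring.
    destruct (outer_rcont _ _ _ _ _ (c - b) Hf Hab ltac:(lra) ltac:(lra) y Hy e He) as [dl [Hdl PP]].
    exists dl; split; auto. intros z Hz Hzy.
    eapply Rle_lt_trans; [apply Rabs_triang_inv2|]. apply PP; auto; lra.
  - eexists; apply (ks_P _ _ _ _ _ HK a b c Hab Hc).
  - intros x Hx. eapply hh_le; eauto; unfold inT' in *; lra.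
Qed.

Lemma inT'_diag Rr a b c : inT' Rr a b -> b <= c <= a -> inT' Rr c b.
Proof. unfold inT'; lra. Qed.

Lemma tr_bound Rr Phi P B w f a b d : KS Rr Phi P B w -> fgood Rr Phi f -> inT' Rr a b -> 0 < d ->
  Rabs (tr f a b d) <= B a b.
Proof.
  intros HK Hf Hab Hd. unfold tr. destruct Rle_dec.
  - eapply Rle_trans; [eapply outer_le; eauto; lra|].
    pose proof (ks_B0 _ _ _ _ _ HK (b + d) b ltac:(eapply inT'_diag; eauto; lra)). lra.
  - rewrite Rabs_R0. eapply ks_B0; eauto.
Qed.

Lemma tr_cauchy Rr Phi P B w f a b d d' : KS Rr Phi P B w -> fgood Rr Phi f -> inT' Rr a b ->
  0 < d' < d -> Rabs (tr f a b d - tr f a b d') <= w d.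
Proof.
  intros HK Hf Hab Hd. unfold tr.
  destruct (Rle_dec (b + d) a); destruct (Rle_dec (b + d') a); try lra.
  - assert (E : RInt (fun x => hh f x b) (b + d') a =
      RInt (fun x => hh f x b) (b + d') (b + d) + RInt (fun x => hh f x b) (b + d) a).
    { symmetry. apply (RInt_Chasles (V := R_CompleteNormedModule)).
      - apply (outer_ex Rr Phi); auto; [eapply inT'_diag; eauto|]; lra.
      - eapply outer_ex; eauto; lra. }
    rewrite E. replace (RInt (fun x : R => hh f x b) (b + d) a -
      (RInt (fun x : R => hh f x b) (b + d') (b + d) + RInt (fun x : R => hh f x b) (b + d) a))
      with (- RInt (fun x : R => hh f x b) (b + d') (b + d)) by ring.
    rewrite Rabs_Ropp.
    assert (Hi : inT' Rr (b + d) b) by (eapply inT'_diag; eauto; lra).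
    eapply Rle_trans; [eapply outer_le; eauto; lra|].
    pose proof (ks_B0 _ _ _ _ _ HK (b + d') b ltac:(eapply inT'_diag; eauto; lra)).
    pose proof (ks_Bw _ _ _ _ _ HK _ _ Hi). replace (b + d - b) with d in * by ring. lra.
  - rewrite Rminus_0_l, Rabs_Ropp.
    eapply Rle_trans; [eapply outer_le; eauto; lra|].
    pose proof (ks_B0 _ _ _ _ _ HK (b + d') b ltac:(eapply inT'_diag; eauto; lra)).
    pose proof (ks_Bw _ _ _ _ _ HK _ _ Hab).
    pose proof (ks_wmono _ _ _ _ _ HK (a - b) d ltac:(unfold inT' in *; lra)). lra.
  - rewrite Rminus_0_r, Rabs_R0. apply (ks_wnn _ _ _ _ _ HK); lra.
Qed.

Lemma small_inv d N : 0 < d -> exists n, (n >= N)%nat /\ 0 < / INR (S n) < d.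
Proof.
  intros Hd. destruct (archimed_cor1 d Hd) as [K [HK HK0]].
  exists (N + K)%nat; split; [lia|]. split.
  - apply Rinv_0_lt_compat, lt_0_INR; lia.
  - eapply Rle_lt_trans; [|exact HK]. apply Rinv_le_contravar.
    + apply lt_0_INR; lia.
    + apply le_INR; lia.
Qed.

Lemma inv_le_of n N : (n >= N)%nat -> (N > 0)%nat -> / INR (S n) <= / INR N.
Proof. intros. apply Rinv_le_contravar; [apply lt_0_INR; lia| apply le_INR; lia]. Qed.

Lemma cauchy_lim (g w : R -> R) :
  (forall x y, 0 <= x <= y -> w x <= w y) ->
  (forall e, 0 < e -> exists d, 0 < d /\ w d < e) ->
  (forall d d', 0 < d' < d -> Rabs (g d - g d') <= w d) ->
  exists l, lim_right0 g l /\ forall d, 0 < d -> Rabs (g d - l) <= w d.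
Proof.
  intros Hm Hl Hc.
  set (u := fun n : nat => g (/ INR (S n))).
  assert (Hu : forall n, 0 < / INR (S n)) by (intros; apply Rinv_0_lt_compat, lt_0_INR; lia).
  assert (Cu : Cauchy_crit u).
  { intros e He. destruct (Hl (e / 2) ltac:(lra)) as [d [Hd Hwd]].
    destruct (archimed_cor1 d Hd) as [K [HK HK0]].
    exists K. intros n m Hn Hm'. unfold Rdist, u.
    pose proof (inv_le_of n K Hn HK0). pose proof (inv_le_of m K Hm' HK0).
    pose proof (Hc d (/ INR (S n)) ltac:(split; [apply Hu|lra])).
    pose proof (Hc d (/ INR (S m)) ltac:(split; [apply Hu|lra])).
    replace (g (/ INR (S n)) - g (/ INR (S m))) with
      (-(g d - g (/ INR (S n))) + (g d - g (/ INR (S m)))) by ring.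
    eapply Rle_lt_trans; [apply Rabs_triang|]. rewrite Rabs_Ropp. lra. }
  destruct (Rcomplete.R_complete u Cu) as [l Hlu].
  assert (Hb : forall d, 0 < d -> Rabs (g d - l) <= w d).
  { intros d Hd. apply Rnot_lt_le. intros Hlt.
    set (e := Rabs (g d - l) - w d).
    destruct (Hlu e ltac:(unfold e; lra)) as [N1 HN1].
    destruct (small_inv d N1 Hd) as [n [Hn [Hn0 Hnd]]].
    specialize (HN1 n Hn). unfold Rdist, u in HN1.
    pose proof (Hc d (/ INR (S n)) ltac:(lra)).
    assert (Rabs (g d - l) <= Rabs (g d - g (/ INR (S n))) + Rabs (g (/ INR (S n)) - l)).
    { replace (g d - l) with ((g d - g (/ INR (S n))) + (g (/ INR (S n)) - l)) by ring.
      apply Rabs_triang. }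
    unfold e in *; lra. }
  exists l; split; auto.
  intros e He. destruct (Hl e He) as [d [Hd Hwd]]. exists d; split; auto.
  intros x Hx. eapply Rle_lt_trans; [apply Hb; lra|].
  apply Rle_lt_trans with (w d); [apply Hm; lra|auto].
Qed.

Lemma DRInt_ext f g a b : (forall x, Rmin a b < x < Rmax a b -> f x = g x) -> ex_RInt g a b ->
  Defs.RInt f a b = RInt g a b.
Proof.
  intros E Hg. assert (Hf : ex_RInt f a b).
  { apply ex_RInt_ext with g; auto. intros; symmetry; auto. }
  rewrite DRInt_eq by auto. apply RInt_ext; auto.
Qed.

Lemma trunc_eq Rr Phi f a b d : fgood Rr Phi f -> inT' Rr a b -> 0 < d ->
  trunc_int f a b d = tr f a b d.
Proof.
  intros Hf Hab Hd. unfold trunc_int, tr. destruct Rle_dec.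
  - rewrite Rmin_left by lra. apply DRInt_ext.
    + intros x Hx. rewrite Rmin_left, Rmax_right in Hx by lra.
      apply DRInt_eq. eapply inner_ex; eauto; [eapply inT'_diag; eauto|]; lra.
    + apply (outer_ex Rr Phi); auto; lra.
  - rewrite Rmin_right by lra. apply DRInt_point.
Qed.

Lemma dint_props Rr Phi P B w f a b : KS Rr Phi P B w -> fgood Rr Phi f -> inT' Rr a b ->
  (forall d, 0 < d -> Rabs (tr f a b d - dint f a b) <= w d) /\
  Rabs (dint f a b) <= B a b /\ lim_right0 (trunc_int f a b) (dint f a b).
Proof.
  intros HK Hf Hab.
  destruct (cauchy_lim (tr f a b) w (ks_wmono _ _ _ _ _ HK) (ks_wlim _ _ _ _ _ HK))
    as [l [Hl Hb]].
  { intros d d' Hd. eapply tr_cauchy; eauto. }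
  assert (Hl' : lim_right0 (trunc_int f a b) l).
  { intros e He. destruct (Hl e He) as [d [Hd P0]]. exists d; split; auto.
    intros x Hx. rewrite (trunc_eq Rr Phi) by (auto; lra). auto. }
  assert (E : dint f a b = l) by (apply Lim0_eq; auto).
  rewrite E. split; [auto|split; [|auto]].
  apply Rnot_lt_le; intros Hlt.
  destruct (ks_wlim _ _ _ _ _ HK (Rabs l - B a b) ltac:(lra)) as [d [Hd Hwd]].
  pose proof (Hb d Hd). pose proof (tr_bound Rr Phi P B w f a b d HK Hf Hab Hd).
  assert (Rabs l <= Rabs (tr f a b d - l) + Rabs (tr f a b d)).
  { replace l with (-(tr f a b d - l) + tr f a b d) at 1 by ring.
    eapply Rle_trans; [apply Rabs_triang|]. rewrite Rabs_Ropp; lra. }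
  lra.
Qed.

Lemma abs_conv_of Rr Phi P B w f a b : KS Rr Phi P B w -> fgood Rr Phi f -> inT' Rr a b ->
  abs_conv f a b.
Proof.
  intros HK Hf Hab. pose proof (fgood_abs _ _ _ Hf) as Hfa.
  split; [|split; [|split]].
  - intros x Hx. assert (Hi : inT' Rr x b) by (eapply inT'_diag; eauto; lra).
    split; constructor; apply ex_RInt_Reals_0.
    + eapply inner_ex; eauto; lra.
    + apply (inner_ex _ _ _ _ _ Hfa Hi); lra.
  - intros d Hd Hbd. split; constructor; apply ex_RInt_Reals_0.
    + apply ex_RInt_ext with (fun x => hh f x b).
      * intros x Hx. rewrite Rmin_left, Rmax_right in Hx by lra. symmetry.
        apply DRInt_eq. eapply inner_ex; eauto; [eapply inT'_diag; eauto|]; lra.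
      * apply (outer_ex Rr Phi); auto; lra.
    + apply ex_RInt_ext with (fun x => hh (fun x s => Rabs (f x s)) x b).
      * intros x Hx. rewrite Rmin_left, Rmax_right in Hx by lra. symmetry.
        apply DRInt_eq. apply (inner_ex _ _ _ _ _ Hfa); [eapply inT'_diag; eauto|]; lra.
      * apply (outer_ex Rr Phi); auto; lra.
  - exists (dint (fun x s => Rabs (f x s)) a b). apply (dint_props _ _ _ _ _ _ _ _ HK Hfa Hab).
  - exists (dint f a b). apply (dint_props _ _ _ _ _ _ _ _ HK Hf Hab).
Qed.

Lemma RInt_bnd (g : R -> R) u v K : u <= v -> ex_RInt g u v -> (forall t, u <= t <= v -> Rabs (g t) <= K) ->
  Rabs (RInt g u v) <= (v - u) * K.
Proof. intros. apply abs_RInt_le_const; auto. Qed.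

Lemma lm1 (x y z : R) : x + y = z -> z - x = y.
Proof. intros; lra. Qed.

Lemma phi_diff Rr Phi f a b a0 b0 d M : fgood Rr Phi f -> inT' Rr a b -> inT' Rr a0 b0 ->
  a0 <= a -> b0 <= b -> 0 < d -> b + d <= a -> b0 + d <= a0 -> 0 <= M ->
  (forall x s, Om Rr d x s -> Rabs (f x s) <= M) ->
  Rabs (tr f a b d - tr f a0 b0 d) <= 4 * Rr * M * ((a - a0) + (b - b0)).
Proof.
  intros Hf Hab Ha0 Haa Hbb Hd Hbd Hbd0 HM HfM.
  unfold tr. destruct (Rle_dec (b + d) a); [|lra]. destruct (Rle_dec (b0 + d) a0); [|lra].
  set (H0 := fun x => hh f x b0). set (H1 := fun x => hh f x b).
  assert (Hab0 : inT' Rr a b0) by (unfold inT' in *; lra).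
  assert (e0 : ex_RInt H0 (b0 + d) a) by (apply (outer_ex Rr Phi); auto; lra).
  assert (e01 : ex_RInt H0 (b0 + d) (b + d)) by (apply exC1 with a; auto; lra).
  assert (e02 : ex_RInt H0 (b + d) a) by (apply exC2 with (b0 + d); auto; lra).
  assert (e03 : ex_RInt H0 (b0 + d) a0) by (apply exC1 with a; auto; lra).
  assert (e04 : ex_RInt H0 a0 a) by (apply exC2 with (b0 + d); auto; lra).
  assert (e1 : ex_RInt H1 (b + d) a) by (apply (outer_ex Rr Phi); auto; lra).
  assert (C1 : RInt H0 (b0 + d) (b + d) + RInt H0 (b + d) a = RInt H0 (b0 + d) a)
    by (apply RIntC; auto).
  assert (C2 : RInt H0 (b0 + d) a0 + RInt H0 a0 a = RInt H0 (b0 + d) a)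
    by (apply RIntC; auto).
  assert (C3 : RInt H1 (b + d) a - RInt H0 (b + d) a = RInt (fun x => H1 x - H0 x) (b + d) a)
    by (symmetry; apply (RInt_minus (V := R_CompleteNormedModule)); auto).
  assert (Hb0 : 0 <= b0) by (unfold inT' in *; lra).
  assert (B0 : forall x, b0 + d <= x <= a -> Rabs (H0 x) <= b0 * M).
  { intros x Hx. unfold H0, hh. replace (b0 * M) with ((b0 - 0) * M) by ring.
    apply RInt_bnd; auto.
    - eapply inner_ex; eauto; [eapply inT'_diag; eauto|]; lra.
    - intros t Ht. apply HfM. unfold Om, inT' in *; lra. }
  assert (B1 : forall x, b + d <= x <= a -> Rabs (H1 x - H0 x) <= (b - b0) * M).
  { intros x Hx. unfold H0, H1, hh.
    assert (Hx' : inT' Rr x b) by (eapply inT'_diag; eauto; lra).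
    assert (ex : ex_RInt (fun s => f x s) 0 b) by (eapply inner_ex; eauto; lra).
    assert (E : RInt (fun s => f x s) 0 b0 + RInt (fun s => f x s) b0 b = RInt (fun s => f x s) 0 b).
    { apply RIntC.
      - apply exC1 with b; auto; lra.
      - apply exC2 with 0; auto; lra. }
    rewrite (lm1 _ _ _ E).
    apply RInt_bnd; auto.
    - apply exC2 with 0; auto; lra.
    - intros t Ht. apply HfM. unfold Om, inT' in *; lra. }
  assert (I1 : Rabs (RInt (fun x => H1 x - H0 x) (b + d) a) <= (a - (b + d)) * ((b - b0) * M)).
  { apply RInt_bnd; [lra| apply exM; auto| intros; apply B1; lra]. }
  assert (I2 : Rabs (RInt H0 a0 a) <= (a - a0) * (b0 * M)).
  { apply RInt_bnd; [lra|auto|intros; apply B0; lra]. }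
  assert (I3 : Rabs (RInt H0 (b0 + d) (b + d)) <= (b + d - (b0 + d)) * (b0 * M)).
  { apply RInt_bnd; [lra|auto|intros; apply B0; lra]. }
  fold H1 H0.
  replace (RInt H1 (b + d) a - RInt H0 (b0 + d) a0) with
    (RInt (fun x => H1 x - H0 x) (b + d) a + RInt H0 a0 a - RInt H0 (b0 + d) (b + d)) by lra.
  assert (Hr : a <= 2 * Rr /\ b0 <= 2 * Rr /\ 0 <= b - b0 /\ 0 <= a - a0 /\ a - (b + d) <= 2 * Rr)
    by (unfold inT' in *; lra).
  assert (J1 : (a - (b + d)) * ((b - b0) * M) <= 2 * Rr * ((b - b0) * M))
    by (apply Rmult_le_compat_r; [apply Rmult_le_pos|]; lra).
  assert (J2 : (a - a0) * (b0 * M) <= (a - a0) * (2 * Rr * M))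
    by (apply Rmult_le_compat_l; [|apply Rmult_le_compat_r]; lra).
  assert (J3 : (b + d - (b0 + d)) * (b0 * M) <= (b - b0) * (2 * Rr * M))
    by (replace (b + d - (b0 + d)) with (b - b0) by ring; apply Rmult_le_compat_l; [|apply Rmult_le_compat_r]; lra).
  unfold Rminus at 1.
  eapply Rle_trans; [apply Rabs_triang|]. rewrite Rabs_Ropp.
  eapply Rle_trans; [apply Rplus_le_compat_r; apply Rabs_triang|].
  assert (0 <= Rr * M * (b - b0)) by (apply Rmult_le_pos; [apply Rmult_le_pos|]; lra).
  nra.
Qed.

Lemma dint_uc Rr Phi P B w f : KS Rr Phi P B w -> fgood Rr Phi f -> ucS (inT' Rr) (dint f).
Proof.
  intros HK Hf e He.
  destruct (ks_wlim _ _ _ _ _ HK (e / 8) ltac:(lra)) as [d1 [Hd1 Hw1]].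
  set (d := d1 / 3).
  assert (Hd : 0 < d) by (unfold d; lra).
  destruct (fg_bnd _ _ _ Hf d Hd) as [M0 HM0].
  set (M := Rabs M0).
  assert (HM : 0 <= M) by apply Rabs_pos.
  assert (HfM : forall x s, Om Rr d x s -> Rabs (f x s) <= M).
  { intros. eapply Rle_trans; [apply HM0; auto| apply RRle_abs]. }
  pose proof (ks_Rr _ _ _ _ _ HK) as HRr.
  set (K := 16 * Rr * M + 1).
  assert (HK0 : 0 < K) by (unfold K; assert (0 <= Rr * M) by (apply Rmult_le_pos; lra); lra).
  set (dl := Rmin (d / 2) (e / (4 * K))).
  assert (Hdl1 : dl <= d / 2) by apply Rmin_l.
  assert (Hdl2 : dl <= e / (4 * K)) by apply Rmin_r.
  assert (Hdl : 0 < dl).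
  { unfold dl, Rmin; destruct Rle_dec; [lra|]. apply Rdiv_lt_0_compat; lra. }
  exists dl; split; auto.
  intros a b a' b' Hp Hq Ha Hb.
  assert (Hwd : w d <= w d1) by (apply (ks_wmono _ _ _ _ _ HK); unfold d; lra).
  destruct (dint_props _ _ _ _ _ _ _ _ HK Hf Hp) as [Tp [Bp _]].
  destruct (dint_props _ _ _ _ _ _ _ _ HK Hf Hq) as [Tq [Bq _]].
  assert (Ha' : Rabs (a - a') < d / 2) by lra.
  assert (Hb' : Rabs (b - b') < d / 2) by lra.
  destruct (Rle_dec (a - b) (2 * d)) as [Near|Far1];
  [|destruct (Rle_dec (a' - b') (2 * d)) as [Near|Far2]].
  -
    assert (a' - b' <= 3 * d) by (unfold Rabs in *; repeat destruct Rcase_abs; lra).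
    assert (w (a - b) <= w d1) by (apply (ks_wmono _ _ _ _ _ HK); unfold inT', d in *; lra).
    assert (w (a' - b') <= w d1) by (apply (ks_wmono _ _ _ _ _ HK); unfold inT', d in *; lra).
    pose proof (ks_Bw _ _ _ _ _ HK _ _ Hp). pose proof (ks_Bw _ _ _ _ _ HK _ _ Hq).
    eapply Rle_lt_trans; [apply Rabs_triang|]. rewrite Rabs_Ropp. lra.
  - assert (a - b <= 3 * d) by (unfold Rabs in *; repeat destruct Rcase_abs; lra).
    assert (w (a - b) <= w d1) by (apply (ks_wmono _ _ _ _ _ HK); unfold inT', d in *; lra).
    assert (w (a' - b') <= w d1) by (apply (ks_wmono _ _ _ _ _ HK); unfold inT', d in *; lra).
    pose proof (ks_Bw _ _ _ _ _ HK _ _ Hp). pose proof (ks_Bw _ _ _ _ _ HK _ _ Hq).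
    eapply Rle_lt_trans; [apply Rabs_triang|]. rewrite Rabs_Ropp. lra.
  - set (a0 := Rmin a a'). set (b0 := Rmin b b').
    assert (Hr : inT' Rr a0 b0) by (unfold a0, b0, Rmin, inT' in *; repeat destruct Rle_dec; lra).
    assert (Hg : b0 + d <= a0) by (unfold a0, b0, Rmin in *; repeat destruct Rle_dec; lra).
    assert (D1 : Rabs (tr f a b d - tr f a0 b0 d) <= 4 * Rr * M * ((a - a0) + (b - b0))).
    { apply (phi_diff Rr Phi); auto; unfold a0, b0, Rmin; repeat destruct Rle_dec; lra. }
    assert (D2 : Rabs (tr f a' b' d - tr f a0 b0 d) <= 4 * Rr * M * ((a' - a0) + (b' - b0))).
    { apply (phi_diff Rr Phi); auto; unfold a0, b0, Rmin; repeat destruct Rle_dec; lra. }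
    assert (S1 : (a - a0) + (b - b0) <= 2 * dl)
      by (unfold a0, b0, Rmin, Rabs in *; repeat destruct Rle_dec; repeat destruct Rcase_abs; lra).
    assert (S2 : (a' - a0) + (b' - b0) <= 2 * dl)
      by (unfold a0, b0, Rmin, Rabs in *; repeat destruct Rle_dec; repeat destruct Rcase_abs; lra).
    assert (RM : 0 <= 4 * Rr * M) by (apply Rmult_le_pos; lra).
    assert (E1 : 4 * Rr * M * ((a - a0) + (b - b0)) <= 4 * Rr * M * (2 * dl)) by (apply Rmult_le_compat_l; lra).
    assert (E2 : 4 * Rr * M * ((a' - a0) + (b' - b0)) <= 4 * Rr * M * (2 * dl)) by (apply Rmult_le_compat_l; lra).
    assert (E3 : 16 * Rr * M * dl < e / 4).
    { apply Rlt_le_trans with (K * dl). { assert (K * dl = 16 * Rr * M * dl + dl) by (unfold K; ring). lra. }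
      apply Rle_trans with (K * (e / (4 * K))). { apply Rmult_le_compat_l; lra. }
      replace (K * (e / (4 * K))) with (e / 4) by (field; lra). lra. }
    pose proof (Tp d Hd). pose proof (Tq d Hd).
    replace (dint f a b - dint f a' b') with
      (-(tr f a b d - dint f a b) + (tr f a b d - tr f a0 b0 d) - (tr f a' b' d - tr f a0 b0 d)
       + (tr f a' b' d - dint f a' b')) by ring.
    repeat (eapply Rle_lt_trans; [apply Rabs_triang|]; apply Rplus_lt_le_0_compat || idtac).
    eapply Rle_lt_trans; [apply Rplus_le_compat_r; apply Rabs_triang|].
    eapply Rle_lt_trans; [apply Rplus_le_compat_r; apply Rplus_le_compat_r; apply Rabs_triang|].
    rewrite !Rabs_Ropp. lra.
Qed.

Definition bndS (S : R -> R -> Prop) (f : R -> R -> R) := exists M, forall x y, S x y -> Rabs (f x y) <= M.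

Lemma uc_sub S T f : (forall x y, S x y -> T x y) -> ucS T f -> ucS S f.
Proof. intros HST H e He. destruct (H e He) as [dl [Hdl P]]. exists dl; split; auto. Qed.

Lemma bnd_sub S T f : (forall x y, S x y -> T x y) -> bndS T f -> bndS S f.
Proof. intros HST [M HM]. exists M; auto. Qed.

Lemma uc_plus S f g : ucS S f -> ucS S g -> ucS S (fun x y => f x y + g x y).
Proof.
  intros Hf Hg e He. destruct (Hf (e/2) ltac:(lra)) as [d1 [Hd1 P1]].
  destruct (Hg (e/2) ltac:(lra)) as [d2 [Hd2 P2]].
  exists (Rmin d1 d2); split; [unfold Rmin; destruct Rle_dec; lra|].
  intros x y x' y' Hs Hs' Hx Hy.
  assert (Rabs (x - x') < d1 /\ Rabs (y - y') < d1 /\ Rabs (x - x') < d2 /\ Rabs (y - y') < d2)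
    by (unfold Rmin in *; destruct Rle_dec; lra).
  replace (f x y + g x y - (f x' y' + g x' y')) with ((f x y - f x' y') + (g x y - g x' y')) by ring.
  eapply Rle_lt_trans; [apply Rabs_triang|].
  pose proof (P1 x y x' y' Hs Hs' ltac:(tauto) ltac:(tauto)).
  pose proof (P2 x y x' y' Hs Hs' ltac:(tauto) ltac:(tauto)). lra.
Qed.

Lemma bnd_plus S f g : bndS S f -> bndS S g -> bndS S (fun x y => f x y + g x y).
Proof.
  intros [M1 H1] [M2 H2]. exists (M1 + M2). intros.
  eapply Rle_trans; [apply Rabs_triang|]. pose proof (H1 x y H). pose proof (H2 x y H). lra.
Qed.

Lemma bnd_mult S f g : bndS S f -> bndS S g -> bndS S (fun x y => f x y * g x y).
Proof.
  intros [M1 H1] [M2 H2]. exists (Rabs M1 * Rabs M2). intros. rewrite Rabs_mult.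
  apply Rmult_le_compat; try apply Rabs_pos.
  - eapply Rle_trans; [apply H1; auto|apply RRle_abs].
  - eapply Rle_trans; [apply H2; auto|apply RRle_abs].
Qed.

Lemma uc_mult S f g : ucS S f -> ucS S g -> bndS S f -> bndS S g -> ucS S (fun x y => f x y * g x y).
Proof.
  intros Hf Hg [M1 HM1] [M2 HM2] e He.
  set (A1 := Rabs M1 + 1). set (A2 := Rabs M2 + 1).
  assert (HA1 : 0 < A1) by (unfold A1; pose proof (Rabs_pos M1); lra).
  assert (HA2 : 0 < A2) by (unfold A2; pose proof (Rabs_pos M2); lra).
  destruct (Hf (e / (2 * A2)) ltac:(apply Rdiv_lt_0_compat; lra)) as [d1 [Hd1 P1]].
  destruct (Hg (e / (2 * A1)) ltac:(apply Rdiv_lt_0_compat; lra)) as [d2 [Hd2 P2]].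
  exists (Rmin d1 d2); split; [unfold Rmin; destruct Rle_dec; lra|].
  intros x y x' y' Hs Hs' Hx Hy.
  assert (Rabs (x - x') < d1 /\ Rabs (y - y') < d1 /\ Rabs (x - x') < d2 /\ Rabs (y - y') < d2)
    by (unfold Rmin in *; destruct Rle_dec; lra).
  pose proof (P1 x y x' y' Hs Hs' ltac:(tauto) ltac:(tauto)) as Q1.
  pose proof (P2 x y x' y' Hs Hs' ltac:(tauto) ltac:(tauto)) as Q2.
  replace (f x y * g x y - f x' y' * g x' y') with
    (f x y * (g x y - g x' y') + g x' y' * (f x y - f x' y')) by ring.
  eapply Rle_lt_trans; [apply Rabs_triang|]. rewrite !Rabs_mult.
  assert (B1 : Rabs (f x y) <= A1) by (unfold A1; eapply Rle_trans; [apply HM1; auto|]; pose proof (RRle_abs M1); lra).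
  assert (B2 : Rabs (g x' y') <= A2) by (unfold A2; eapply Rle_trans; [apply HM2; auto|]; pose proof (RRle_abs M2); lra).
  assert (Rabs (f x y) * Rabs (g x y - g x' y') <= A1 * (e / (2 * A1))).
  { apply Rmult_le_compat; try apply Rabs_pos; lra. }
  assert (Rabs (g x' y') * Rabs (f x y - f x' y') < A2 * (e / (2 * A2))).
  { apply Rle_lt_trans with (A2 * Rabs (f x y - f x' y')).
    - apply Rmult_le_compat_r; [apply Rabs_pos|lra].
    - apply Rmult_lt_compat_l; lra. }
  replace (A1 * (e / (2 * A1))) with (e / 2) in * by (field; lra).
  replace (A2 * (e / (2 * A2))) with (e / 2) in * by (field; lra). lra.
Qed.

Lemma uc_inv S f c : ucS S f -> 0 < c -> (forall x y, S x y -> c <= Rabs (f x y)) ->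
  ucS S (fun x y => / f x y).
Proof.
  intros Hf Hc Hb e He.
  destruct (Hf (e * (c * c)) ltac:(apply Rmult_lt_0_compat; [|apply Rmult_lt_0_compat]; lra)) as [d [Hd P]].
  exists d; split; auto. intros x y x' y' Hs Hs' Hx Hy.
  pose proof (Hb x y Hs). pose proof (Hb x' y' Hs').
  assert (N1 : f x y <> 0) by (intro E; rewrite E, Rabs_R0 in *; lra).
  assert (N2 : f x' y' <> 0) by (intro E; rewrite E, Rabs_R0 in *; lra).
  replace (/ f x y - / f x' y') with ((f x' y' - f x y) / (f x y * f x' y')) by (field; auto).
  unfold Rdiv. rewrite Rabs_mult, Rabs_inv, Rabs_mult.
  assert (Hcc : c * c <= Rabs (f x y) * Rabs (f x' y')) by (apply Rmult_le_compat; lra).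
  assert (Q : Rabs (f x' y' - f x y) < e * (c * c)) by (rewrite Rabs_minus_sym; apply P; auto).
  apply Rmult_lt_reg_r with (Rabs (f x y) * Rabs (f x' y')); [nra|].
  rewrite Rmult_assoc, Rinv_l by nra. rewrite Rmult_1_r.
  apply Rlt_le_trans with (e * (c * c)); auto. apply Rmult_le_compat_l; lra.
Qed.

Lemma uc_fst S : ucS S (fun x y => x).
Proof. intros e He. exists e; split; auto. Qed.
Lemma uc_snd S : ucS S (fun x y => y).
Proof. intros e He. exists e; split; auto. Qed.
Lemma uc_const S c : ucS S (fun x y => c).
Proof. intros e He. exists 1; split; [lra|]. intros. rewrite Rminus_diag, Rabs_R0; auto. Qed.
Lemma uc_abs S f : ucS S f -> ucS S (fun x y => Rabs (f x y)).
Proof.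
  intros H e He. destruct (H e He) as [d [Hd P]]. exists d; split; auto.
  intros. eapply Rle_lt_trans; [apply Rabs_triang_inv2|]. auto.
Qed.

Lemma uc_ext S f g : (forall x y, S x y -> f x y = g x y) -> ucS S f -> ucS S g.
Proof.
  intros E H e He. destruct (H e He) as [d [Hd P]]. exists d; split; auto.
  intros. rewrite <- !E by auto. auto.
Qed.

Lemma lam_uc lam Rr : 0 < Rr -> cont_on lam 0 Rr ->
  forall e, 0 < e -> exists d, 0 < d /\ forall x y, 0 <= x <= Rr -> 0 <= y <= Rr ->
    Rabs (x - y) < d -> Rabs (lam x - lam y) < e.
Proof.
  intros HR Hc e He.
  assert (U : uniform_continuity (fun x => lam (clamp 0 Rr x)) (fun c => 0 <= c <= Rr)).
  { apply Heine; [apply compact_P3|]. intros x Hx.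
    unfold continuity_pt, continue_in, limit1_in, limit_in. intros e' He'.
    destruct (Hc (clamp 0 Rr x) (clamp_in 0 Rr x ltac:(lra)) e' He') as [d [Hd P]].
    exists d; split; auto. intros y [_ Hy]. simpl in *. unfold Rdist in *.
    apply P; [apply clamp_in; lra|]. eapply Rle_lt_trans; [apply clamp_lip; lra|]. auto. }
  destruct (U (mkposreal e He)) as [[d Hd] P]. exists d; split; auto.
  intros x y Hx Hy Hxy. specialize (P x y Hx Hy Hxy). simpl in P.
  rewrite !clamp_id in P by auto. auto.
Qed.

Definition k1 eps lam (x y : R) := lam ((x - y) / 2) / (4 * eps).
Definition k2 (x y : R) := x * y / (x ^ 2 - y ^ 2) ^ 2.

Lemma k1_uc eps lam Rr : 0 < Rr -> 0 < eps -> cont_on lam 0 Rr -> ucS (fun x y => inT' Rr x y) (k1 eps lam).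
Proof.
  intros HR He Hc e Hee.
  destruct (lam_uc lam Rr HR Hc (e * (4 * eps)) ltac:(apply Rmult_lt_0_compat; lra)) as [d [Hd P]].
  exists d; split; auto. intros x y x' y' Hs Hs' Hx Hy. unfold k1.
  replace (lam ((x - y) / 2) / (4 * eps) - lam ((x' - y') / 2) / (4 * eps)) with
    ((lam ((x - y) / 2) - lam ((x' - y') / 2)) / (4 * eps)) by (field; lra).
  unfold Rdiv. rewrite Rabs_mult, Rabs_inv, (Rabs_right (4 * eps)) by lra.
  apply Rmult_lt_reg_r with (4 * eps); [lra|]. rewrite Rmult_assoc, Rinv_l, Rmult_1_r by lra.
  apply P; unfold inT' in *; try lra.
  replace ((x - y) / 2 - (x' - y') / 2) with (((x - x') - (y - y')) / 2) by field.
  unfold Rabs in *; repeat destruct Rcase_abs; lra.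
Qed.

Lemma k1_bnd eps lam Rr L : 0 < eps -> (forall r, 0 <= r <= Rr -> Rabs (lam r) / (4 * eps) <= L) ->
  forall x y, inT' Rr x y -> Rabs (k1 eps lam x y) <= L.
Proof.
  intros He HL x y Hs. unfold k1. unfold Rdiv. rewrite Rabs_mult, Rabs_inv, (Rabs_right (4 * eps)) by lra.
  apply HL. unfold inT' in *; lra.
Qed.

Lemma k2_den Rr d x y : 0 < d -> Om Rr d x y -> d ^ 4 <= Rabs ((x ^ 2 - y ^ 2) ^ 2).
Proof.
  intros Hd [Hs Hxy]. unfold inT' in Hs.
  assert (E : x ^ 2 - y ^ 2 = (x - y) * (x + y)) by ring.
  assert (P1 : d * d <= (x - y) * (x + y)) by (apply Rmult_le_compat; lra).
  rewrite Rabs_right by (apply Rle_ge; apply pow2_ge_0).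
  rewrite E. replace (d ^ 4) with ((d * d) ^ 2) by ring.
  apply pow_incr. split; [nra|lra].
Qed.

Lemma k2_uc Rr d : 0 < d -> ucS (Om Rr d) k2.
Proof.
  intros Hd. unfold k2, Rdiv.
  assert (Bx : bndS (Om Rr d) (fun x y => x)).
  { exists (2 * Rr). intros x y [Hs _]. unfold inT' in Hs. rewrite Rabs_right; lra. }
  assert (By : bndS (Om Rr d) (fun x y => y)).
  { exists (2 * Rr). intros x y [Hs _]. unfold inT' in Hs. rewrite Rabs_right; lra. }
  assert (Uxy : ucS (Om Rr d) (fun x y => x * y)) by (apply uc_mult; auto using uc_fst, uc_snd).
  assert (Bxy : bndS (Om Rr d) (fun x y => x * y)) by (apply bnd_mult; auto).
  assert (Bxx : bndS (Om Rr d) (fun x y => x * x)) by (apply bnd_mult; auto).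
  assert (Byy : bndS (Om Rr d) (fun x y => y * y)) by (apply bnd_mult; auto).
  assert (Ud : ucS (Om Rr d) (fun x y => x * x + (-1) * (y * y))).
  { apply uc_plus.
    - apply uc_mult; auto using uc_fst.
    - apply uc_mult.
      + apply uc_const.
      + apply uc_mult; auto using uc_snd.
      + exists 1; intros; unfold Rabs; destruct Rcase_abs; lra.
      + apply bnd_mult; auto. }
  assert (Bd : bndS (Om Rr d) (fun x y => x * x + (-1) * (y * y))).
  { apply bnd_plus; auto. apply bnd_mult; auto. exists 1; intros; unfold Rabs; destruct Rcase_abs; lra. }
  assert (Ud2 : ucS (Om Rr d) (fun x y => (x ^ 2 - y ^ 2) ^ 2)).
  { apply uc_ext with (fun x y => (x * x + (-1) * (y * y)) * (x * x + (-1) * (y * y))).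
    - intros; ring.
    - apply uc_mult; auto. }
  apply uc_mult; auto.
  - apply uc_inv with (d ^ 4); auto; [apply pow_lt; auto|]. intros; eapply k2_den; eauto.
  - exists (/ d ^ 4). intros x y H. rewrite Rabs_inv. apply Rinv_le_contravar; [apply pow_lt; auto|].
    eapply k2_den; eauto.
Qed.

Lemma k2_bnd Rr d : 0 < d -> bndS (Om Rr d) k2.
Proof.
  intros Hd. unfold k2, Rdiv. apply bnd_mult.
  - exists (2 * Rr * (2 * Rr)). intros x y [Hs _]. unfold inT' in Hs. rewrite Rabs_mult.
    rewrite !Rabs_right by lra. apply Rmult_le_compat; lra.
  - exists (/ d ^ 4). intros x y H. rewrite Rabs_inv. apply Rinv_le_contravar; [apply pow_lt; auto|].
    eapply k2_den; eauto.
Qed.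

Lemma k2_nn Rr x y : inT' Rr x y -> y < x -> 0 <= k2 x y.
Proof.
  intros Hs Hxy. unfold inT' in Hs. unfold k2, Rdiv. apply Rmult_le_pos; [nra|].
  left. apply Rinv_0_lt_compat. apply pow_lt. nra.
Qed.

Section dummy. End dummy.

Lemma fgood_build Rr eps lam L g Bp :
  0 < Rr -> 0 < eps -> cont_on lam 0 Rr ->
  (forall r, 0 <= r <= Rr -> Rabs (lam r) / (4 * eps) <= L) ->
  ucS (inT' Rr) g -> (forall x y, inT' Rr x y -> Rabs (g x y) <= Bp x y) -> bndS (inT' Rr) g ->
  let Phi := fun x s => (L + k2 x s) * Bp x s in
  fgood Rr Phi (K1 eps lam g) /\ fgood Rr Phi (K2 g) /\
  fgood Rr Phi (fun x s => K1 eps lam g x s + K2 g x s).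
Proof.
  intros HR He Hc HL Hg HgB Hgb Phi.
  assert (HL0 : 0 <= L) by (eapply Rle_trans; [|apply (HL 0); lra];
    apply Rmult_le_pos; [apply Rabs_pos|left; apply Rinv_0_lt_compat; lra]).
  assert (Sub : forall d x y, Om Rr d x y -> inT' Rr x y) by (intros d x y [H0 _]; auto).
  assert (U1 : forall d, 0 < d -> ucS (Om Rr d) (K1 eps lam g)).
  { intros d Hd. apply uc_ext with (fun x s => k1 eps lam x s * g x s); [reflexivity|].
    apply uc_mult.
    - apply uc_sub with (inT' Rr); [apply Sub|]. apply k1_uc; auto.
    - apply uc_sub with (inT' Rr); [apply Sub|]. auto.
    - exists L. intros x y Hs. eapply k1_bnd; eauto.
    - apply bnd_sub with (inT' Rr); [apply Sub|]. auto. }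
  assert (U2 : forall d, 0 < d -> ucS (Om Rr d) (K2 g)).
  { intros d Hd. apply uc_ext with (fun x s => k2 x s * g x s); [reflexivity|].
    apply uc_mult.
    - apply k2_uc; auto.
    - apply uc_sub with (inT' Rr); [apply Sub|]. auto.
    - apply k2_bnd; auto.
    - apply bnd_sub with (inT' Rr); [apply Sub|]. auto. }
  assert (B1 : forall d, 0 < d -> bndS (Om Rr d) (K1 eps lam g)).
  { intros d Hd. apply (bnd_mult (Om Rr d) (k1 eps lam) g).
    - exists L. intros x y Hs. eapply k1_bnd; eauto.
    - apply bnd_sub with (inT' Rr); [apply Sub|]. auto. }
  assert (B2 : forall d, 0 < d -> bndS (Om Rr d) (K2 g)).
  { intros d Hd. apply (bnd_mult (Om Rr d) k2 g).
    - apply k2_bnd; auto.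
    - apply bnd_sub with (inT' Rr); [apply Sub|]. auto. }
  assert (L1 : forall x s, inT' Rr x s -> s < x -> Rabs (K1 eps lam g x s) <= L * Bp x s).
  { intros x s Hs Hxs. change (K1 eps lam g x s) with (k1 eps lam x s * g x s).
    rewrite Rabs_mult. apply Rmult_le_compat; try apply Rabs_pos; auto. eapply k1_bnd; eauto. }
  assert (L2 : forall x s, inT' Rr x s -> s < x -> Rabs (K2 g x s) <= k2 x s * Bp x s).
  { intros x s Hs Hxs. change (K2 g x s) with (k2 x s * g x s).
    rewrite Rabs_mult, (Rabs_right (k2 x s)) by (apply Rle_ge; eapply k2_nn; eauto).
    apply Rmult_le_compat_l; auto. eapply k2_nn; eauto. }
  assert (P0 : forall x s, inT' Rr x s -> s < x -> 0 <= k2 x s * Bp x s).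
  { intros. apply Rmult_le_pos; [eapply k2_nn; eauto|]. eapply Rle_trans; [apply Rabs_pos|apply HgB; auto]. }
  assert (P1 : forall x s, inT' Rr x s -> s < x -> 0 <= L * Bp x s).
  { intros. apply Rmult_le_pos; auto. eapply Rle_trans; [apply Rabs_pos|apply HgB; auto]. }
  unfold Phi. split; [|split]; split.
  - exact U1.
  - intros x s Hs Hxs. rewrite Rmult_plus_distr_r. pose proof (L1 x s Hs Hxs). pose proof (P0 x s Hs Hxs). lra.
  - exact B1.
  - exact U2.
  - intros x s Hs Hxs. rewrite Rmult_plus_distr_r. pose proof (L2 x s Hs Hxs). pose proof (P1 x s Hs Hxs). lra.
  - exact B2.
  - intros d Hd. apply uc_plus; auto.
  - intros x s Hs Hxs. cbv beta. rewrite Rmult_plus_distr_r. pose proof (L1 x s Hs Hxs). pose proof (L2 x s Hs Hxs).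
    eapply Rle_trans; [apply Rabs_triang|]. lra.
  - intros d Hd. apply bnd_plus; auto.
Qed.

Lemma tr_plus Rr Phi f1 f2 a b d : fgood Rr Phi f1 -> fgood Rr Phi f2 -> inT' Rr a b -> 0 < d ->
  tr (fun x s => f1 x s + f2 x s) a b d = tr f1 a b d + tr f2 a b d.
Proof.
  intros H1 H2 Hab Hd. unfold tr. destruct Rle_dec as [Hr|Hr]; [|ring].
  rewrite <- RIntP by (apply (outer_ex Rr Phi); auto; lra).
  apply RInt_ext. intros x Hx. rewrite Rmin_left, Rmax_right in Hx by lra.
  unfold hh. apply RIntP; eapply inner_ex; eauto; (eapply inT'_diag; eauto; lra) || lra.
Qed.

Lemma dint_plus Rr Phi P B w f1 f2 a b : KS Rr Phi P B w -> fgood Rr Phi f1 -> fgood Rr Phi f2 ->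
  fgood Rr Phi (fun x s => f1 x s + f2 x s) ->
  inT' Rr a b -> dint (fun x s => f1 x s + f2 x s) a b = dint f1 a b + dint f2 a b.
Proof.
  intros HK H1 H2 H12 Hab. unfold dint at 1. apply Lim0_eq.
  destruct (dint_props _ _ _ _ _ _ _ _ HK H1 Hab) as [_ [_ L1]].
  destruct (dint_props _ _ _ _ _ _ _ _ HK H2 Hab) as [_ [_ L2]].
  intros e He. destruct (L1 (e/2) ltac:(lra)) as [d1 [Hd1 Q1]].
  destruct (L2 (e/2) ltac:(lra)) as [d2 [Hd2 Q2]].
  exists (Rmin d1 d2); split; [unfold Rmin; destruct Rle_dec; lra|].
  intros x Hx. assert (x < d1 /\ x < d2) by (unfold Rmin in *; destruct Rle_dec; lra).
  specialize (Q1 x ltac:(lra)). specialize (Q2 x ltac:(lra)).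
  rewrite (trunc_eq Rr Phi f1) in Q1 by (auto; lra).
  rewrite (trunc_eq Rr Phi f2) in Q2 by (auto; lra).
  rewrite (trunc_eq Rr Phi) by (auto; lra).
  rewrite (tr_plus Rr Phi) by (auto; lra).
  replace (tr f1 a b x + tr f2 a b x - (dint f1 a b + dint f2 a b)) with
    ((tr f1 a b x - dint f1 a b) + (tr f2 a b x - dint f2 a b)) by ring.
  eapply Rle_lt_trans; [apply Rabs_triang|]. lra.
Qed.

Definition cA L i := L ^ (i + 1) / (INR (fact i) * INR (fact (i + 1))).
Definition cX j := / INR (fact j).
Definition Fo L i j x y := cA L i * x ^ i * y ^ i * (x - y) * ln ((x + y) / (x - y)) ^ j * cX j.
Definition Xm j x y := match j with O => 0 | S j' => ln ((x + y) / (x - y)) ^ j' * cX j' end.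
Definition Q L i j x y := cA L i *
  (INR i * x ^ (pred i) * y ^ i * (x - y) * ln ((x + y) / (x - y)) ^ j * cX j
   + x ^ i * y ^ i * ln ((x + y) / (x - y)) ^ j * cX j
   - 2 * y * x ^ i * y ^ i / (x + y) * Xm j x y).
Definition dQ L i j x y :=
  (match i with O => 0 | S i' => L * Fo L i' j x y end) +
  4 * (x * y / (x ^ 2 - y ^ 2) ^ 2) *
  (match j with O => 0 | S j' => Fo L i j' x y - match j' with O => 0 | S j'' => Fo L i j'' x y end end).

Lemma fact_nz n : INR (fact n) <> 0.
Proof. apply INR_fact_neq_0. Qed.

Lemma cX_S j : cX j = cX (S j) * INR (S j).
Proof.
  unfold cX. rewrite fact_simpl, mult_INR. pose proof (fact_nz j).
  assert (INR (S j) <> 0) by (apply not_0_INR; lia). field; auto.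
Qed.

Lemma cA_S L i : L * cA L i = cA L (S i) * INR (S i) * INR (S (S i)).
Proof.
  unfold cA. replace (S i + 1)%nat with (S (i + 1)) by lia.
  rewrite (fact_simpl (i + 1)), (fact_simpl i), !mult_INR.
  replace (S (i + 1)) with (S (S i)) by lia.
  pose proof (fact_nz i). pose proof (fact_nz (i + 1)).
  assert (INR (S i) <> 0) by (apply not_0_INR; lia).
  assert (INR (S (S i)) <> 0) by (apply not_0_INR; lia).
  assert (E : L ^ S (S i) = L * L ^ (i + 1)) by (replace (S (S i)) with (S (i + 1)) by lia; reflexivity).
  rewrite E. field. auto.
Qed.

Ltac sidec H := repeat split; try lra; try (apply Rmult_lt_0_compat; [lra|apply Rinv_0_lt_compat; lra]).

Ltac toR := match goal with |- @eq _ ?a ?b => change (@eq R a b) end.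

Lemma D1 L i j x y : 0 <= y < x -> is_derive (fun x => Fo L i j x y) x (Q L i j x y).
Proof.
  intros H. unfold Fo, Q, Xm.
  destruct j as [|j]; auto_derive; try (sidec H; fail); toR;
    change (ln ((x + y) * / (x + - y))) with (ln ((x + y) / (x - y)));
    set (l := ln ((x + y) / (x - y))).
  change (match j with 0%nat => 1 | S _ => INR j + 1 end) with (INR (S j)).
  rewrite (cX_S j). rewrite S_INR. rewrite <- !tech_pow_Rmult. field. lra.
Qed.

Ltac fixINR := repeat match goal with |- context [match ?k with 0%nat => 1 | S _ => INR ?k + 1 end] => change (match k with 0%nat => 1 | S _ => INR k + 1 end) with (INR (S k)) end.
Ltac fixcX := repeat match goal with |- context [cX ?k] => match goal with |- context [cX (S k)] => rewrite (cX_S k) | |- context [cX (S (S k))] => rewrite (cX_S k) end end.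
Ltac posINR := repeat match goal with |- context [INR ?k] => lazymatch goal with H : 0 <= INR k |- _ => fail | _ => pose proof (pos_INR k) end end.

Lemma cA_S' L i : cA L (S i) = L * cA L i / (INR (S i) * INR (S (S i))).
Proof.
  rewrite cA_S. assert (INR (S i) <> 0) by (apply not_0_INR; lia).
  assert (INR (S (S i)) <> 0) by (apply not_0_INR; lia). field; auto.
Qed.

Lemma D2 L i j x y : 0 <= y < x -> is_derive (fun y => Q L i j x y) y (dQ L i j x y).
Proof.
  intros H. unfold Q, Xm, dQ, Fo.
  Ltac fixcA := repeat match goal with |- context [cA ?L (S ?k)] => rewrite (cA_S' L k) end.
  assert (Hd : x ^ 2 - y ^ 2 <> 0) by nra.
  assert (Hd' : x * x - y * y <> 0) by nra.
  destruct j as [|[|j]]; destruct i as [|i]; auto_derive; try (sidec H; fail); toR;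
    change (ln ((x + y) * / (x + - y))) with (ln ((x + y) / (x - y)));
    set (l := ln ((x + y) / (x - y))).
  all: fixINR; fixcX; fixcA; rewrite <- ?tech_pow_Rmult; rewrite ?S_INR; simpl INR; posINR.
  all: field; repeat split; try lra.
Qed.

Lemma sumL_app l1 l2 f : sumL (l1 ++ l2) f = sumL l1 f + sumL l2 f.
Proof. induction l1; simpl; [unfold sumL; simpl; ring|]. unfold sumL in *; simpl. rewrite IHl1; ring. Qed.

Lemma sumL_ext l f g : (forall x, In x l -> f x = g x) -> sumL l f = sumL l g.
Proof.
  induction l; intros H; [reflexivity|]. unfold sumL in *; simpl.
  rewrite H by (left; auto). rewrite IHl; auto. intros; apply H; right; auto.
Qed.

Lemma sumL_plus l f g : sumL l (fun x => f x + g x) = sumL l f + sumL l g.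
Proof. induction l; unfold sumL in *; simpl; [ring|]. rewrite IHl; ring. Qed.

Lemma sumL_minus l f g : sumL l (fun x => f x - g x) = sumL l f - sumL l g.
Proof. induction l; unfold sumL in *; simpl; [ring|]. rewrite IHl; ring. Qed.

Lemma sumL_scal l c f : sumL l (fun x => c * f x) = c * sumL l f.
Proof. induction l; unfold sumL in *; simpl; [ring|]. rewrite IHl; ring. Qed.

Lemma sumL_zero l : sumL l (fun _ => 0) = 0.
Proof. induction l; unfold sumL in *; simpl; [ring|]. rewrite IHl; ring. Qed.

Lemma sumL_cons a l f : sumL (a :: l) f = f a + sumL l f.
Proof. reflexivity. Qed.

Lemma sumL_shift s k f : sumL (seq (S s) k) f = sumL (seq s k) (fun i => f (S i)).
Proof. rewrite <- seq_shift. unfold sumL. rewrite map_map. reflexivity. Qed.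

Lemma sumL_last s k f : sumL (seq s (S k)) f = sumL (seq s k) f + f (s + k)%nat.
Proof. rewrite seq_S, sumL_app. unfold sumL at 2; simpl. ring. Qed.

Definition SumF (C : nat -> nat -> R) (T : nat -> nat -> R) (n : nat) : R :=
  T n 0%nat + sumL (seq 0 n) (fun i => sumL (seq 1 (n - i)) (fun j => C (n - i)%nat j / 4 ^ (n - i) * T i j)).

Definition catalan (C : nat -> nat -> R) : Prop :=
  C 1%nat 1%nat = 1 /\ (forall i, C i 0%nat = 0) /\ (forall i j, (i < j)%nat -> C i j = 0) /\
  (forall i j, (2 <= i)%nat -> (1 <= j <= i)%nat -> C i j = C (i - 1)%nat (j - 1)%nat + C i (j + 1)%nat).

Definition Kp (phi : nat -> R) (j : nat) : R :=
  match j with O => 0 | S j' => phi j' - match j' with O => 0 | S j'' => phi j'' end end.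

Lemma Kid C phi k : catalan C -> (1 <= k)%nat ->
  4 * sumL (seq 1 k) (fun j => C k j / 4 ^ k * Kp phi j) =
  (if Nat.eq_dec k 1 then phi 0%nat else sumL (seq 1 (k - 1)) (fun j => C (k - 1)%nat j / 4 ^ (k - 1) * phi j)).
Proof.
  intros [C11 [C0 [Cz Cr]]] Hk.
  rewrite sumL_shift.
  assert (E1 : sumL (seq 0 k) (fun i => C k (S i) / 4 ^ k * Kp phi (S i)) =
    sumL (seq 0 k) (fun i => C k (S i) / 4 ^ k * phi i) -
    sumL (seq 0 k) (fun i => C k (S (S i)) / 4 ^ k * phi i)).
  { destruct k as [|k]; [lia|].
    transitivity (sumL (seq 0 (S k)) (fun i => C (S k) (S i) / 4 ^ S k * phi i) -
      sumL (seq 0 (S k)) (fun i => C (S k) (S i) / 4 ^ S k * match i with O => 0 | S i' => phi i' end)).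
    { rewrite <- sumL_minus. apply sumL_ext; intros; simpl Kp; ring. }
    f_equal.
    rewrite (sumL_last 0 k (fun i => C (S k) (S (S i)) / 4 ^ S k * phi i)).
    rewrite (Cz (S k) (S (S (0 + k)))) by lia.
    simpl seq at 1. rewrite sumL_cons. rewrite sumL_shift. unfold Rdiv; ring. }
  rewrite E1. rewrite <- sumL_minus.
  destruct (Nat.eq_dec k 1) as [->|Hk1].
  - unfold sumL; simpl. rewrite C11, (Cz 1%nat 2%nat) by lia. field.
  - rewrite <- sumL_scal.
    destruct k as [|k]; [lia|]. replace (S k - 1)%nat with k by lia.
    rewrite (sumL_ext _ _ (fun i => C k i / 4 ^ k * phi i)).
    + destruct k as [|k]; [lia|]. change (seq 0 (S (S k))) with (0%nat :: seq 1 (S k)). rewrite sumL_cons, C0. unfold Rdiv; ring.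
    + intros i Hi. apply in_seq in Hi.
      rewrite (Cr (S k) (S i)) by lia. replace (S k - 1)%nat with k by lia.
      replace (S i - 1)%nat with i by lia. replace (S i + 1)%nat with (S (S i)) by lia.
      simpl pow. field. apply pow_nonzero; lra.
Qed.

Lemma SumF_id C L kv (F dQ : nat -> nat -> R) m : catalan C ->
  (forall i j, dQ i j = (match i with O => 0 | S i' => L * F i' j end) + 4 * kv * Kp (F i) j) ->
  SumF C dQ (S m) = (L + kv) * SumF C F m.
Proof.
  intros HC HdQ. unfold SumF.
  rewrite (HdQ (S m) 0%nat). simpl Kp.
  rewrite (sumL_ext _ _ (fun i => sumL (seq 1 (S m - i)) (fun j => C (S m - i)%nat j / 4 ^ (S m - i) *
     (match i with O => 0 | S i' => L * F i' j end)) +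
     kv * (4 * sumL (seq 1 (S m - i)) (fun j => C (S m - i)%nat j / 4 ^ (S m - i) * Kp (F i) j)))).
  2: { intros i _. rewrite <- sumL_scal, <- sumL_scal, <- sumL_plus. apply sumL_ext.
       intros j _. rewrite HdQ. ring. }
  rewrite sumL_plus.
  assert (EL : sumL (seq 0 (S m)) (fun i => sumL (seq 1 (S m - i)) (fun j => C (S m - i)%nat j / 4 ^ (S m - i) *
     (match i with O => 0 | S i' => L * F i' j end))) =
     L * sumL (seq 0 m) (fun i => sumL (seq 1 (m - i)) (fun j => C (m - i)%nat j / 4 ^ (m - i) * F i j))).
  { change (seq 0 (S m)) with (0%nat :: seq 1 m). rewrite sumL_cons.
    rewrite (sumL_ext _ _ (fun _ => 0)) by (intros; ring). rewrite sumL_zero, Rplus_0_l.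
    rewrite sumL_shift. rewrite <- sumL_scal. apply sumL_ext. intros i _.
    simpl (S m - S i)%nat. rewrite <- sumL_scal. apply sumL_ext. intros; ring. }
  assert (EK : sumL (seq 0 (S m)) (fun i => kv * (4 * sumL (seq 1 (S m - i)) (fun j => C (S m - i)%nat j / 4 ^ (S m - i) * Kp (F i) j))) =
     kv * (F m 0%nat + sumL (seq 0 m) (fun i => sumL (seq 1 (m - i)) (fun j => C (m - i)%nat j / 4 ^ (m - i) * F i j)))).
  { rewrite sumL_scal. f_equal.
    rewrite (sumL_ext _ _ (fun i => if Nat.eq_dec (S m - i) 1 then F i 0%nat else
        sumL (seq 1 (S m - i - 1)) (fun j => C (S m - i - 1)%nat j / 4 ^ (S m - i - 1) * F i j))).
    2: { intros i Hi. apply in_seq in Hi. apply Kid; auto. lia. }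
    rewrite sumL_last. simpl (0 + m)%nat.
    replace (S m - m)%nat with 1%nat by lia. destruct (Nat.eq_dec 1 1); [|lia].
    rewrite Rplus_comm. f_equal. apply sumL_ext. intros i Hi. apply in_seq in Hi.
    destruct (Nat.eq_dec (S m - i) 1); [lia|]. replace (S m - i - 1)%nat with (m - i)%nat by lia. reflexivity. }
  rewrite EL, EK. ring.
Qed.

Lemma is_derive_sumL (l : list nat) (g : nat -> R -> R) dg x :
  (forall i, In i l -> is_derive (g i) x (dg i)) ->
  is_derive (fun t => sumL l (fun i => g i t)) x (sumL l dg).
Proof.
  induction l as [|a l IH]; intros H.
  - unfold sumL; simpl. apply (is_derive_const (K := R_AbsRing) 0 x).
  - unfold sumL in *; simpl.
    apply (is_derive_plus (K := R_AbsRing) (V := R_NormedModule) (g a) (fun t => fold_right Rplus 0 (map (fun i => g i t) l))).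
    + apply H; left; auto.
    + apply IH. intros; apply H; right; auto.
Qed.

Lemma continuous_sumL (l : list nat) (g : nat -> R -> R) x :
  (forall i, In i l -> continuous (g i) x) ->
  continuous (fun t => sumL l (fun i => g i t)) x.
Proof.
  induction l as [|a l IH]; intros H.
  - unfold sumL; simpl. apply continuous_const.
  - unfold sumL in *; simpl.
    apply (continuous_plus (g a) (fun t => fold_right Rplus 0 (map (fun i => g i t) l))).
    + apply H; left; auto.
    + apply IH. intros; apply H; right; auto.
Qed.

Lemma is_derive_SumF C n (T : nat -> nat -> R -> R) dT x :
  (forall i j, is_derive (T i j) x (dT i j)) ->
  is_derive (fun t => SumF C (fun i j => T i j t) n) x (SumF C dT n).
Proof.
  intros H. unfold SumF.
  apply (is_derive_plus (K := R_AbsRing) (V := R_NormedModule) (T n 0%nat)); auto.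
  apply (is_derive_sumL _ (fun i t => sumL (seq 1 (n - i)) (fun j => C (n - i)%nat j / 4 ^ (n - i) * T i j t))).
  intros i _. apply (is_derive_sumL _ (fun j t => C (n - i)%nat j / 4 ^ (n - i) * T i j t)).
  intros j _. apply (is_derive_scal (T i j)). auto.
Qed.

Lemma continuous_SumF C n (T : nat -> nat -> R -> R) x :
  (forall i j, continuous (T i j) x) ->
  continuous (fun t => SumF C (fun i j => T i j t) n) x.
Proof.
  intros H. unfold SumF.
  apply (continuous_plus (T n 0%nat)); auto.
  apply (continuous_sumL _ (fun i t => sumL (seq 1 (n - i)) (fun j => C (n - i)%nat j / 4 ^ (n - i) * T i j t))).
  intros i _. apply (continuous_sumL _ (fun j t => C (n - i)%nat j / 4 ^ (n - i) * T i j t)).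
  intros j _. apply (continuous_scal_r (K := R_AbsRing) (V := R_NormedModule) (C (n - i)%nat j / 4 ^ (n - i)) (T i j)). auto.
Qed.

Lemma Q_cont L i j x y : 0 <= y < x -> continuous (fun x => Q L i j x y) x.
Proof.
  intros H. apply (ex_derive_continuous (K := R_AbsRing) (V := R_NormedModule)). unfold Q, Xm.
  destruct j as [|j]; auto_derive; sidec H.
Qed.

Lemma dQ_cont L i j x y : 0 <= y < x -> continuous (fun y => dQ L i j x y) y.
Proof.
  intros H. apply (ex_derive_continuous (K := R_AbsRing) (V := R_NormedModule)). unfold dQ, Fo.
  assert (Hd : x ^ 2 - y ^ 2 <> 0) by nra.
  assert (Hd' : x * x - y * y <> 0) by nra.
  destruct j as [|[|j]]; destruct i as [|i]; auto_derive; sidec H. all: replace (x * (x * 1) + - (y * (y * 1))) with (x * x - y * y) by ring; apply Rmult_integral_contrapositive; split; [auto|rewrite Rmult_1_r; auto].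
Qed.

Lemma Q_at0 L i j x : 0 < x -> (i <> 0 \/ j <> 0)%nat -> Q L i j x 0 = 0.
Proof.
  intros Hx Hij. unfold Q, Xm.
  replace ((x + 0) / (x - 0)) with 1 by (field; lra). rewrite ln_1.
  destruct j as [|j].
  - destruct i as [|i]; [destruct Hij as [Hh|Hh]; exfalso; apply Hh; reflexivity|]. simpl pow. unfold Rdiv; ring.
  - rewrite (pow_ne_zero (S j)) by lia. unfold Rdiv; ring.
Qed.

Lemma F_Fo L i j a b : b < a -> F L i j a b = Fo L i j a b.
Proof.
  intros H. unfold F, Fo, cA, cX. destruct Rlt_dec; [|lra].
  pose proof (fact_nz i). pose proof (fact_nz (i + 1)). pose proof (fact_nz j).
  field. auto.
Qed.

Lemma F_diag L i j a b : ~ b < a -> F L i j a b = 0.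
Proof. intros H. unfold F. destruct Rlt_dec; [lra|auto]. Qed.

Lemma fact_pos n : 0 < INR (fact n).
Proof. apply lt_0_INR, lt_O_fact. Qed.

Lemma lnr_nn a b : 0 <= b < a -> 0 <= ln ((a + b) / (a - b)).
Proof.
  intros H. rewrite <- ln_1. apply ln_le; [lra|].
  apply Rmult_le_reg_r with (a - b); [lra|]. unfold Rdiv. rewrite Rmult_assoc, Rinv_l by lra. lra.
Qed.

Lemma F_nn L i j a b : 0 <= L -> 0 <= b <= a -> 0 <= F L i j a b.
Proof.
  intros HL Hab. destruct (Rlt_dec b a) as [H|H]; [|rewrite F_diag; lra].
  rewrite F_Fo by auto. unfold Fo, cA, cX.
  pose proof (fact_pos i). pose proof (fact_pos (i + 1)). pose proof (fact_pos j).
  pose proof (lnr_nn a b ltac:(lra)).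
  repeat apply Rmult_le_pos; try apply pow_le; try lra;
    try (left; apply Rinv_0_lt_compat; try apply Rmult_lt_0_compat; auto).
Qed.

Lemma catalan_nn C : catalan C -> forall i j, 0 <= C i j.
Proof.
  intros [C11 [C0 [Cz Cr]]].
  intros i. induction i as [i IH] using lt_wf_ind.
  destruct (le_lt_dec 2 i) as [Hi|Hi].
  - assert (forall k j, (i + 1 - j = k)%nat -> 0 <= C i j).
    { intros k. induction k as [|k IHk]; intros j Hk.
      - rewrite Cz by lia. lra.
      - destruct j as [|j]; [rewrite C0; lra|].
        destruct (le_lt_dec (S j) i) as [Hj|Hj]; [|rewrite Cz by lia; lra].
        rewrite Cr by lia. apply Rplus_le_le_0_compat.
        + apply IH; lia.
        + apply IHk; lia. }
    intros j; apply (H (i + 1 - j)%nat); auto.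
  - intros j. destruct i as [|[|i]]; [|destruct j as [|[|j]]|lia].
    + destruct j; [rewrite C0|rewrite Cz by lia]; lra.
    + rewrite C0; lra.
    + rewrite C11; lra.
    + rewrite Cz by lia; lra.
Qed.

Lemma exp_pow x n : exp x ^ n = exp (INR n * x).
Proof.
  induction n; simpl pow; [simpl; rewrite Rmult_0_l, exp_0; auto|].
  rewrite IHn, <- exp_plus, S_INR. f_equal. ring.
Qed.

Lemma sqrt_exp v : sqrt (exp v) = exp (v / 2).
Proof.
  replace (exp v) with (exp (v / 2) * exp (v / 2)) by (rewrite <- exp_plus; f_equal; field).
  apply sqrt_square. left; apply exp_pos.
Qed.

Lemma ln_pow_bound j u : 1 <= u -> ln u ^ j <= (2 * INR j + 2) ^ j * sqrt u.
Proof.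
  intros Hu. set (v := ln u). assert (Hv : 0 <= v) by (unfold v; rewrite <- ln_1; apply ln_le; lra).
  set (m := 2 * INR j + 2). pose proof (pos_INR j). assert (Hm : 0 < m) by (unfold m; lra).
  assert (E1 : v <= m * exp (v / m)).
  { pose proof (exp_ineq1_le (v / m)). apply Rmult_le_compat_l with (r := m) in H0; [|lra].
    replace (m * (1 + v / m)) with (m + v) in H0 by (field; lra). lra. }
  assert (E2 : v ^ j <= (m * exp (v / m)) ^ j) by (apply pow_incr; lra).
  rewrite Rpow_mult_distr, exp_pow in E2.
  assert (E3 : exp (INR j * (v / m)) <= exp (v / 2)).
  { apply exp_le_3 || idtac. destruct (Req_dec (INR j * (v / m)) (v / 2)) as [E|E]; [rewrite E; lra|].
    left. apply exp_increasing.
    unfold Rdiv. rewrite <- Rmult_assoc.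
    assert (INR j * / m <= / 2).
    { apply Rmult_le_reg_r with m; auto. rewrite Rmult_assoc, Rinv_l by lra. unfold m. lra. }
    assert (INR j * v * / m <= / 2 * v) by (rewrite Rmult_assoc, (Rmult_comm v), <- Rmult_assoc; apply Rmult_le_compat_r; lra).
    lra. }
  assert (E4 : sqrt u = exp (v / 2)) by (unfold v; rewrite <- sqrt_exp, exp_ln; lra).
  rewrite E4. eapply Rle_trans; [apply E2|]. apply Rmult_le_compat_l; [apply pow_le; lra|]. auto.
Qed.

Lemma tlog_bound j T t : 0 < t <= T -> t * ln (T / t) ^ j <= (2 * INR j + 2) ^ j * sqrt T * sqrt t.
Proof.
  intros Ht. assert (H1 : 1 <= T / t).
  { apply Rmult_le_reg_r with t; [lra|]. unfold Rdiv. rewrite Rmult_assoc, Rinv_l by lra. lra. }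
  pose proof (ln_pow_bound j (T / t) H1).
  rewrite sqrt_div_alt in H by lra.
  pose proof (sqrt_lt_R0 t (proj1 Ht)).
  assert (E : t = sqrt t * sqrt t) by (rewrite sqrt_sqrt; lra).
  apply Rle_trans with (t * ((2 * INR j + 2) ^ j * (sqrt T / sqrt t))).
  - apply Rmult_le_compat_l; lra.
  - right. rewrite E at 1. field. lra.
Qed.

Definition SB (Rr : R) (f : R -> R -> R) := exists K, 0 <= K /\ forall a b, inT' Rr a b -> f a b <= K * sqrt (a - b).

Lemma F_SB Rr L i j : 0 <= L -> 0 < Rr -> SB Rr (F L i j).
Proof.
  intros HL HR.
  set (K := cA L i * ((2 * Rr) ^ i * (2 * Rr) ^ i) * cX j * ((2 * INR j + 2) ^ j * sqrt (2 * Rr))).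
  assert (HcA : 0 <= cA L i).
  { unfold cA. pose proof (fact_pos i). pose proof (fact_pos (i + 1)).
    apply Rmult_le_pos; [apply pow_le; auto|left; apply Rinv_0_lt_compat, Rmult_lt_0_compat; auto]. }
  assert (HcX : 0 < cX j) by (unfold cX; apply Rinv_0_lt_compat, fact_pos).
  pose proof (pos_INR j).
  assert (HK : 0 <= K).
  { assert (0 <= (2 * Rr) ^ i) by (apply pow_le; lra). unfold K; apply Rmult_le_pos; [apply Rmult_le_pos; [apply Rmult_le_pos; [auto|apply Rmult_le_pos; auto]|lra] | apply Rmult_le_pos; [apply pow_le; lra|apply sqrt_pos]]. }
  exists K; split; auto. intros a b Hab. unfold inT' in Hab.
  destruct (Rlt_dec b a) as [Hlt|Hge].
  2: { rewrite F_diag by auto. replace (a - b) with 0 by lra. rewrite sqrt_0. lra. }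
  rewrite F_Fo by auto. unfold Fo.
  set (l := ln ((a + b) / (a - b))).
  assert (Hl0 : 0 <= l) by (apply lnr_nn; lra).
  assert (Hl1 : l <= ln (2 * Rr / (a - b))).
  { apply ln_le. apply Rdiv_lt_0_compat; lra.
    unfold Rdiv. apply Rmult_le_compat_r; [left; apply Rinv_0_lt_compat; lra|lra]. }
  assert (Hlj : l ^ j <= ln (2 * Rr / (a - b)) ^ j) by (apply pow_incr; split; lra).
  pose proof (tlog_bound j (2 * Rr) (a - b) ltac:(lra)) as Ht.
  assert (Hai : a ^ i * b ^ i <= (2 * Rr) ^ i * (2 * Rr) ^ i).
  { apply Rmult_le_compat; try apply pow_le; try lra; apply pow_incr; split; lra. }
  assert (P1 : (a - b) * l ^ j <= (2 * INR j + 2) ^ j * sqrt (2 * Rr) * sqrt (a - b)).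
  { eapply Rle_trans; [|apply Ht]. apply Rmult_le_compat_l; lra. }
  assert (P0 : 0 <= (a - b) * l ^ j) by (apply Rmult_le_pos; [lra|apply pow_le; lra]).
  replace (cA L i * a ^ i * b ^ i * (a - b) * l ^ j * cX j) with
    (cA L i * (a ^ i * b ^ i) * cX j * ((a - b) * l ^ j)) by ring.
  assert (HX : 0 <= a ^ i * b ^ i) by (apply Rmult_le_pos; apply pow_le; lra).
  apply Rle_trans with (cA L i * ((2 * Rr) ^ i * (2 * Rr) ^ i) * cX j * ((a - b) * l ^ j)).
  - apply Rmult_le_compat_r; auto. apply Rmult_le_compat_r; [lra|]. apply Rmult_le_compat_l; auto.
  - unfold K. replace (cA L i * ((2 * Rr) ^ i * (2 * Rr) ^ i) * cX j * ((2 * INR j + 2) ^ j * sqrt (2 * Rr)) * sqrt (a - b))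
      with (cA L i * ((2 * Rr) ^ i * (2 * Rr) ^ i) * cX j * ((2 * INR j + 2) ^ j * sqrt (2 * Rr) * sqrt (a - b))) by ring.
    apply Rmult_le_compat_l; auto.
    apply Rmult_le_pos; [apply Rmult_le_pos; [auto|]|lra]. apply Rmult_le_pos; apply pow_le; lra.
Qed.

Lemma SB_plus Rr f g : SB Rr f -> SB Rr g -> SB Rr (fun a b => f a b + g a b).
Proof.
  intros [K1 [H1 P1]] [K2 [H2 P2]]. exists (K1 + K2); split; [lra|].
  intros. rewrite Rmult_plus_distr_r. pose proof (P1 a b H). pose proof (P2 a b H). lra.
Qed.

Lemma SB_scal Rr c f : 0 <= c -> SB Rr f -> SB Rr (fun a b => c * f a b).
Proof.
  intros Hc [K [HK P]]. exists (c * K); split; [apply Rmult_le_pos; auto|].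
  intros. rewrite Rmult_assoc. apply Rmult_le_compat_l; auto.
Qed.

Lemma SB_sumL Rr (l : list nat) (g : nat -> R -> R -> R) :
  (forall i, In i l -> SB Rr (g i)) -> SB Rr (fun a b => sumL l (fun i => g i a b)).
Proof.
  induction l as [|x l IH]; intros H.
  - exists 0. split; [lra|]. intros. unfold sumL; simpl. lra.
  - apply (SB_plus Rr (g x) (fun a b => sumL l (fun i => g i a b))).
    + apply H; left; auto.
    + apply IH; intros; apply H; right; auto.
Qed.

Lemma SB_SumF Rr C n (T : nat -> nat -> R -> R -> R) : (forall i j, 0 <= C i j) ->
  (forall i j, SB Rr (T i j)) -> SB Rr (fun a b => SumF C (fun i j => T i j a b) n).
Proof.
  intros HC HT. unfold SumF. apply (SB_plus Rr (T n 0%nat)); auto.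
  apply (SB_sumL Rr _ (fun i a b => sumL (seq 1 (n - i)) (fun j => C (n - i)%nat j / 4 ^ (n - i) * T i j a b))).
  intros i _. apply (SB_sumL Rr _ (fun j a b => C (n - i)%nat j / 4 ^ (n - i) * T i j a b)).
  intros j _. apply SB_scal; auto. unfold Rdiv. apply Rmult_le_pos; auto.
  left. apply Rinv_0_lt_compat, pow_lt; lra.
Qed.

Lemma SumF_nn C n (T : nat -> nat -> R) : (forall i j, 0 <= C i j) -> (forall i j, 0 <= T i j) -> 0 <= SumF C T n.
Proof.
  intros HC HT. unfold SumF. apply Rplus_le_le_0_compat; auto.
  induction (seq 0 n) as [|x l IH]; unfold sumL in *; simpl; [lra|].
  apply Rplus_le_le_0_compat; auto.
  induction (seq 1 (n - x)) as [|y l' IH']; simpl; [lra|].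
  apply Rplus_le_le_0_compat; auto. apply Rmult_le_pos; auto.
  unfold Rdiv. apply Rmult_le_pos; auto. left. apply Rinv_0_lt_compat, pow_lt; lra.
Qed.

Definition Bst C L n a b := SumF C (fun i j => F L i j a b) n.
Definition Pn C L n x y := SumF C (fun i j => Q L i j x y) n.

Lemma SumF_ext C n (T T' : nat -> nat -> R) : (forall i j, T i j = T' i j) -> SumF C T n = SumF C T' n.
Proof.
  intros E. unfold SumF. rewrite E. f_equal. apply sumL_ext; intros. apply sumL_ext; intros. rewrite E; auto.
Qed.

Lemma Pn0 C L m x : 0 < x -> Pn C L (S m) x 0 = 0.
Proof.
  intros Hx. unfold Pn, SumF. rewrite Q_at0 by (auto; lia).
  rewrite (sumL_ext _ _ (fun _ => 0)). { rewrite sumL_zero. ring. }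
  intros i _. rewrite (sumL_ext _ _ (fun _ => 0)). { apply sumL_zero. }
  intros j Hj. apply in_seq in Hj. rewrite Q_at0 by (auto; lia). ring.
Qed.

Lemma Bst_Bo C L n a b : b < a -> Bst C L n a b = SumF C (fun i j => Fo L i j a b) n.
Proof. intros H. apply SumF_ext. intros. apply F_Fo; auto. Qed.

Lemma KS_build C L Rr m : catalan C -> 0 <= L -> 0 < Rr ->
  exists M, KS Rr (fun x s => (L + k2 x s) * Bst C L m x s) (Pn C L (S m)) (Bst C L (S m)) (fun t => M * sqrt t).
Proof.
  intros HC HL HR.
  pose proof (catalan_nn C HC) as HCn.
  destruct (SB_SumF Rr C (S m) (fun i j => F L i j) HCn (fun i j => F_SB Rr L i j HL HR)) as [M [HM HMb]].
  exists M. split.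
  - auto.
  - intros x b Hxb Hb.
    assert (H0b : 0 <= b) by (unfold inT' in *; lra).
    assert (FT : is_RInt (fun s => SumF C (fun i j => dQ L i j x s) (S m)) 0 b
                   (minus (Pn C L (S m) x b) (Pn C L (S m) x 0))).
    { apply (is_RInt_derive (V := R_CompleteNormedModule) (fun s => Pn C L (S m) x s)).
      - intros s Hs. rewrite Rmin_left, Rmax_right in Hs by lra.
        apply (is_derive_SumF C (S m) (fun i j s => Q L i j x s)). intros; apply D2; lra.
      - intros s Hs. rewrite Rmin_left, Rmax_right in Hs by lra.
        apply (continuous_SumF C (S m) (fun i j s => dQ L i j x s)). intros; apply dQ_cont; lra. }
    rewrite Pn0 in FT by lra. change (minus (Pn C L (S m) x b) 0) with (Pn C L (S m) x b - 0) in FT.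
    rewrite Rminus_0_r in FT.
    apply (is_RInt_ext _ _ _ _ _ ) with (2 := FT).
    intros s Hs. rewrite Rmin_left, Rmax_right in Hs by lra.
    rewrite (SumF_id C L (k2 x s) (fun i j => Fo L i j x s) (fun i j => dQ L i j x s) m HC).
    + rewrite Bst_Bo by lra. reflexivity.
    + intros i j. reflexivity.
  - intros a b c Hab Hc.
    assert (FT : is_RInt (fun x => Pn C L (S m) x b) c a
                   (minus (SumF C (fun i j => Fo L i j a b) (S m)) (SumF C (fun i j => Fo L i j c b) (S m)))).
    { apply (is_RInt_derive (V := R_CompleteNormedModule) (fun x => SumF C (fun i j => Fo L i j x b) (S m))).
      - intros x Hx. rewrite Rmin_left, Rmax_right in Hx by lra.
        apply (is_derive_SumF C (S m) (fun i j x => Fo L i j x b)). intros; apply D1; unfold inT' in *; lra.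
      - intros x Hx. rewrite Rmin_left, Rmax_right in Hx by lra.
        apply (continuous_SumF C (S m) (fun i j x => Q L i j x b)). intros; apply Q_cont; unfold inT' in *; lra. }
    rewrite <- !Bst_Bo in FT by lra. exact FT.
  - intros a b Hab. apply SumF_nn; auto. intros; apply F_nn; auto; unfold inT' in *; lra.
  - intros a b Hab. apply HMb; auto.
  - intros x y Hxy. apply Rmult_le_compat_l; auto. apply sqrt_le_1_alt; lra.
  - intros x Hx. apply Rmult_le_pos; auto; apply sqrt_pos.
  - intros e He. exists ((e / (M + 1)) ^ 2). split.
    + apply pow_lt. apply Rdiv_lt_0_compat; lra.
    + rewrite sqrt_pow2 by (left; apply Rdiv_lt_0_compat; lra).
      apply Rlt_le_trans with ((M + 1) * (e / (M + 1))).
      * apply Rmult_lt_compat_r; [apply Rdiv_lt_0_compat|]; lra.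
      * right; field; lra.
Qed.

Lemma G0_facts eps lam L Rr : 0 < Rr -> 0 < eps -> cont_on lam 0 Rr ->
  (forall r, 0 <= r <= Rr -> Rabs (lam r) / (4 * eps) <= L) ->
  (forall a b, inT' Rr a b -> Rabs (G eps lam 0 a b) <= F L 0 0 a b) /\
  ucS (inT' Rr) (G eps lam 0) /\ bndS (inT' Rr) (G eps lam 0).
Proof.
  intros HR He Hc HL.
  set (h := fun r => lam r / (2 * eps)).
  assert (Hh : forall r, 0 <= r <= Rr -> Rabs (h r) <= 2 * L).
  { intros r Hr. unfold h. specialize (HL r Hr).
    assert (E : Rabs (lam r / (2 * eps)) = 2 * (Rabs (lam r) / (4 * eps))).
    { unfold Rdiv. rewrite Rabs_mult, Rabs_inv, (Rabs_right (2 * eps)) by lra. field; lra. }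
    rewrite E. lra. }
  assert (HL0 : 0 <= L) by (pose proof (Hh 0 ltac:(lra)); pose proof (Rabs_pos (h 0)); lra).
  assert (Hex : forall u v, 0 <= u <= v -> v <= Rr -> ex_RInt h u v).
  { intros u v Huv Hv. apply rcont_ex_RInt; [lra|]. intros x Hx e' He'.
    destruct (Hc x ltac:(lra) (e' * (2 * eps))) as [d [Hd P]].
    { apply Rmult_lt_0_compat; lra. }
    exists d; split; auto. intros y Hy Hyx. unfold h.
    replace (lam y / (2 * eps) - lam x / (2 * eps)) with ((lam y - lam x) / (2 * eps)) by (field; lra).
    unfold Rdiv. rewrite Rabs_mult, Rabs_inv, (Rabs_right (2 * eps)) by lra.
    apply Rmult_lt_reg_r with (2 * eps); [lra|]. rewrite Rmult_assoc, Rinv_l, Rmult_1_r by lra.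
    apply P; auto; lra. }
  set (I := fun v : R => (RInt h 0 v : R)).
  assert (HG : forall a b, inT' Rr a b -> G eps lam 0 a b = - (I (a / 2) - I (b / 2))).
  { intros a b Hab. unfold inT' in Hab. simpl. fold h.
    rewrite DRInt_eq by (apply Hex; lra).
    unfold I. rewrite (chas_sub h 0 (b / 2) (a / 2)) by (apply Hex; lra). reflexivity. }
  assert (HI : forall u v, 0 <= u <= v -> v <= Rr -> Rabs (I v - I u) <= 2 * L * (v - u)).
  { intros u v Huv Hv. unfold I. rewrite <- (chas_sub h 0 u v) by (apply Hex; lra).
    rewrite Rmult_comm. apply RInt_bnd; [lra|apply Hex; lra|]. intros; apply Hh; lra. }
  assert (HI' : forall u v, 0 <= u <= Rr -> 0 <= v <= Rr -> Rabs (I v - I u) <= 2 * L * Rabs (v - u)).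
  { intros u v Hu Hv. destruct (Rle_dec u v).
    - rewrite (Rabs_right (v - u)) by lra. apply HI; lra.
    - rewrite Rabs_minus_sym, (Rabs_left1 (v - u)) by lra.
      replace (- (v - u)) with (u - v) by ring. apply HI; lra. }
  split; [|split].
  - intros a b Hab. rewrite HG by auto. rewrite Rabs_Ropp.
    assert (Hab' := Hab). unfold inT' in Hab'.
    eapply Rle_trans; [apply HI; lra|].
    destruct (Rlt_dec b a) as [Hlt|Hge].
    + unfold F. destruct Rlt_dec; [|lra]. simpl. right. field.
    + rewrite F_diag by auto. replace (a / 2 - b / 2) with 0 by lra. lra.
  - intros e Hee. exists (e / (2 * L + 2)). split; [apply Rdiv_lt_0_compat; lra|].
    intros a b a' b' Hp Hq Ha Hb. rewrite !HG by auto.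
    unfold inT' in Hp, Hq.
    replace (- (I (a / 2) - I (b / 2)) - - (I (a' / 2) - I (b' / 2))) with
      ((I (a' / 2) - I (a / 2)) - (I (b' / 2) - I (b / 2))) by ring.
    eapply Rle_lt_trans; [apply Rabs_triang|]. rewrite Rabs_Ropp.
    pose proof (HI' (a / 2) (a' / 2) ltac:(lra) ltac:(lra)).
    pose proof (HI' (b / 2) (b' / 2) ltac:(lra) ltac:(lra)).
    replace (a' / 2 - a / 2) with (- (a - a') / 2) in * by field.
    replace (b' / 2 - b / 2) with (- (b - b') / 2) in * by field.
    unfold Rdiv in *. rewrite Rabs_mult, Rabs_Ropp, (Rabs_right (/ 2)) in * by lra.
    assert (Q1 : 2 * L * (Rabs (a - a') * / 2) <= L * (e * / (2 * L + 2))).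
    { replace (2 * L * (Rabs (a - a') * / 2)) with (L * Rabs (a - a')) by field. apply Rmult_le_compat_l; lra. }
    assert (Q2 : 2 * L * (Rabs (b - b') * / 2) <= L * (e * / (2 * L + 2))).
    { replace (2 * L * (Rabs (b - b') * / 2)) with (L * Rabs (b - b')) by field. apply Rmult_le_compat_l; lra. }
    assert (Q3 : 2 * (L * (e * / (2 * L + 2))) < e).
    { replace (2 * (L * (e * / (2 * L + 2)))) with (e * (2 * L / (2 * L + 2))) by (field; lra).
      rewrite <- (Rmult_1_r e) at 2. apply Rmult_lt_compat_l; auto.
      apply Rmult_lt_reg_r with (2 * L + 2); [lra|]. unfold Rdiv. rewrite Rmult_assoc, Rinv_l by lra. lra. }
    lra.
  - exists (2 * L * Rr). intros a b Hab. rewrite HG by auto. rewrite Rabs_Ropp.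
    unfold inT' in Hab. eapply Rle_trans; [apply HI; lra|].
    apply Rmult_le_compat_l; lra.
Qed.

Lemma main_ind eps Rr lam Lb C : 0 < eps -> 0 < Rr -> cont_on lam 0 Rr ->
  (forall rho, 0 <= rho <= Rr -> Rabs (lam rho) / (4 * eps) <= Lb) -> catalan C ->
  forall n, ucS (inT' Rr) (G eps lam n) /\ (forall a b, inT' Rr a b -> Rabs (G eps lam n a b) <= Bst C Lb n a b)
    /\ bndS (inT' Rr) (G eps lam n).
Proof.
  intros He HR Hc HL HC.
  assert (HL0 : 0 <= Lb).
  { eapply Rle_trans; [|apply (HL 0); lra].
    unfold Rdiv; apply Rmult_le_pos; [apply Rabs_pos|left; apply Rinv_0_lt_compat; lra]. }
  intros n; induction n as [|m IH].
  - destruct (G0_facts eps lam Lb Rr HR He Hc HL) as [B0 [U0 D0]].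
    split; [auto|split; [|auto]].
    intros a b Hab. assert (E : Bst C Lb 0 a b = F Lb 0 0 a b).
    { unfold Bst, SumF, sumL. simpl seq. simpl map. simpl fold_right. ring. }
    rewrite E. auto.
  - destruct IH as [IHu [IHb IHd]].
    destruct (fgood_build Rr eps lam Lb (G eps lam m) (Bst C Lb m) HR He Hc HL IHu IHb IHd)
      as [F1 [F2 F12]].
    destruct (KS_build C Lb Rr m HC HL0 HR) as [M HK].
    assert (EG : forall a b, inT' Rr a b -> G eps lam (S m) a b =
      dint (fun x s => K1 eps lam (G eps lam m) x s + K2 (G eps lam m) x s) a b).
    { intros a b Hab. rewrite (dint_plus _ _ _ _ _ _ _ a b HK F1 F2 F12 Hab). reflexivity. }
    split; [|split].
    + apply uc_ext with (dint (fun x s => K1 eps lam (G eps lam m) x s + K2 (G eps lam m) x s)).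
      * intros; symmetry; auto.
      * eapply dint_uc; eauto.
    + intros a b Hab. rewrite EG by auto. apply (dint_props _ _ _ _ _ _ _ _ HK F12 Hab).
    + exists (M * sqrt (2 * Rr)). intros a b Hab. rewrite EG by auto.
      eapply Rle_trans; [apply (dint_props _ _ _ _ _ _ _ _ HK F12 Hab)|].
      eapply Rle_trans; [apply (ks_Bw _ _ _ _ _ HK); auto|].
      apply (ks_wmono _ _ _ _ _ HK). unfold inT' in Hab; lra.
Qed.

Theorem lemma3 (eps Rr : R) (lam : R -> R) (lbar : R) (C : nat -> nat -> R) :
  0 < eps -> 0 < Rr -> cont_on lam 0 Rr ->
  (exists rho, 0 <= rho <= Rr /\ lbar = Rabs (lam rho) / (4 * eps)) ->
  (forall rho, 0 <= rho <= Rr -> Rabs (lam rho) / (4 * eps) <= lbar) ->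
  C 1%nat 1%nat = 1 ->
  (forall i, C i 0%nat = 0) ->
  (forall i j, (i < j)%nat -> C i j = 0) ->
  (forall i j, (2 <= i)%nat -> (1 <= j <= i)%nat ->
     C i j = C (i - 1)%nat (j - 1)%nat + C i (j + 1)%nat) ->
  (forall alpha beta, inT' Rr alpha beta ->
     Rabs (G eps lam 0 alpha beta) <= F lbar 0 0 alpha beta) /\
  (forall n : nat, (1 <= n)%nat -> forall alpha beta, inT' Rr alpha beta ->
     abs_conv (K1 eps lam (G eps lam (n - 1))) alpha beta /\
     abs_conv (K2 (G eps lam (n - 1))) alpha beta /\
     Rabs (G eps lam n alpha beta)
       <= F lbar n 0 alpha beta
          + sumL (seq 0 n) (fun i =>
              sumL (seq 1 (n - i)) (fun j =>
                C (n - i)%nat j / 4 ^ (n - i) * F lbar i j alpha beta))).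
Proof.
  intros He HR Hc _ HL C11 C0 Cz Cr.
  assert (HC : catalan C) by (repeat split; auto).
  assert (HL0 : 0 <= lbar).
  { eapply Rle_trans; [|apply (HL 0); lra].
    unfold Rdiv; apply Rmult_le_pos; [apply Rabs_pos|left; apply Rinv_0_lt_compat; lra]. }
  pose proof (main_ind eps Rr lam lbar C He HR Hc HL HC) as MI.
  split.
  - intros a b Hab. destruct (MI 0%nat) as [_ [B0 _]]. specialize (B0 a b Hab).
    assert (E : Bst C lbar 0 a b = F lbar 0 0 a b).
    { unfold Bst, SumF, sumL. simpl seq. simpl map. simpl fold_right. ring. }
    rewrite E in B0. auto.
  - intros n Hn a b Hab. destruct n as [|m]; [lia|].
    replace (S m - 1)%nat with m by lia.
    destruct (MI m) as [IHu [IHb IHd]].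
    destruct (fgood_build Rr eps lam lbar (G eps lam m) (Bst C lbar m) HR He Hc HL IHu IHb IHd)
      as [F1 [F2 F12]].
    destruct (KS_build C lbar Rr m HC HL0 HR) as [M HK].
    split; [|split].
    + eapply abs_conv_of; eauto.
    + eapply abs_conv_of; eauto.
    + destruct (MI (S m)) as [_ [B _]]. apply B; auto.
Qed.
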